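(* Let $0<\beta\le1$ and let $f(z)=z+\sum_{n\ge2}a_nz^n\in\mathcal S^*_{\Sigma,\beta}$. Then $|a_3-a_2^2|\le\beta$.
   Context: Let $\mathbb U=\{z\in\mathbb C:|z|<1\}$; $\Sigma$ is the class of $f(z)=z+\sum_{n\ge2}a_nz^n$ analytic and univalent in $\mathbb U$ whose inverse extends to an analytic univalent function $g=f^{-1}$ on $\mathbb U$. $F\prec G$ means $F=G\circ w$ for some analytic $w:\mathbb U\to\mathbb U$ with $w(0)=0$. $\mathcal S^*_{\Sigma,\beta}$ (strongly bi-starlike of order $\beta$) is the set of $f\in\Sigma$ with $\frac{zf'(z)}{f(z)}\prec\big(\frac{1+z}{1-z}\big)^\beta$ and $\frac{wg'(w)}{g(w)}\prec\big(\frac{1+w}{1-w}\big)^\beta$ (principal power). *)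

(* Defs.v *)
From Stdlib Require Import Reals Lra.
Open Scope R_scope.

Definition Cplx : Type := (R * R)%type.
Definition C0 : Cplx := (0, 0).
Definition C1 : Cplx := (1, 0).
Definition Cadd (u v : Cplx) : Cplx := (fst u + fst v, snd u + snd v).
Definition Copp (u : Cplx) : Cplx := (- fst u, - snd u).
Definition Csub (u v : Cplx) : Cplx := Cadd u (Copp v).
Definition Cmul (u v : Cplx) : Cplx :=
  (fst u * fst v - snd u * snd v, fst u * snd v + snd u * fst v).
Definition Cinv (u : Cplx) : Cplx :=
  (fst u / (fst u ^ 2 + snd u ^ 2), - snd u / (fst u ^ 2 + snd u ^ 2)).
Definition Cdiv (u v : Cplx) : Cplx := Cmul u (Cinv v).
Definition Cnorm (u : Cplx) : R := sqrt (fst u ^ 2 + snd u ^ 2).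
Fixpoint Cpow (u : Cplx) (n : nat) : Cplx :=
  match n with O => C1 | S m => Cmul u (Cpow u m) end.
Definition Cexp (u : Cplx) : Cplx := (exp (fst u) * cos (snd u), exp (fst u) * sin (snd u)).

(* principal argument, in (-PI, PI] *)
Definition Arg (u : Cplx) : R :=
  let x := fst u in let y := snd u in
  if Rlt_dec 0 x then atan (y / x)
  else if Rlt_dec x 0 then
    (if Rle_dec 0 y then atan (y / x) + PI else atan (y / x) - PI)
  else if Rlt_dec 0 y then PI / 2
  else if Rlt_dec y 0 then - (PI / 2) else 0.

(* principal power u^b = exp (b * Log u), Log the principal logarithm (u <> 0) *)
Definition Cpowr (u : Cplx) (b : R) : Cplx :=
  Cexp (b * ln (Cnorm u), b * Arg u).

Definition inU (z : Cplx) : Prop := Cnorm z < 1.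

Fixpoint psum (c : nat -> Cplx) (z : Cplx) (n : nat) : Cplx :=
  match n with
  | O => Cmul (c O) (Cpow z O)
  | S m => Cadd (psum c z m) (Cmul (c (S m)) (Cpow z (S m)))
  end.

Definition ps_sum (c : nat -> Cplx) (z : Cplx) (s : Cplx) : Prop :=
  forall eps, 0 < eps -> exists N : nat, forall n, (N <= n)%nat ->
    Cnorm (Csub (psum c z n) s) < eps.

Definition analytic_U (h : Cplx -> Cplx) : Prop :=
  exists c : nat -> Cplx, forall z, inU z -> ps_sum c z (h z).

Definition univalent_U (h : Cplx -> Cplx) : Prop :=
  forall z1 z2, inU z1 -> inU z2 -> h z1 = h z2 -> z1 = z2.

Definition has_cderiv (h : Cplx -> Cplx) (z d : Cplx) : Prop :=
  forall eps, 0 < eps -> exists delta, 0 < delta /\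
    forall k, k <> C0 -> Cnorm k < delta ->
      Cnorm (Csub (Cdiv (Csub (h (Cadd z k)) (h z)) k) d) < eps.

Definition subordinate (F G : Cplx -> Cplx) : Prop :=
  exists w : Cplx -> Cplx, analytic_U w /\ w C0 = C0 /\
    (forall z, inU z -> inU (w z)) /\
    (forall z, inU z -> F z = G (w z)).

Definition strong_fun (beta : R) (z : Cplx) : Cplx :=
  Cpowr (Cdiv (Cadd C1 z) (Csub C1 z)) beta.

(* z h'(z)/h(z), with its removable singularity at 0 filled by the value 1 *)
Definition starlike_quot (h hd : Cplx -> Cplx) (z : Cplx) : Cplx :=
  if Req_EM_T (fst z) 0 then
    (if Req_EM_T (snd z) 0 then C1 else Cdiv (Cmul z (hd z)) (h z))
  else Cdiv (Cmul z (hd z)) (h z).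

Definition strongly_starlike_cond (beta : R) (h : Cplx -> Cplx) : Prop :=
  exists hd : Cplx -> Cplx, (forall z, inU z -> has_cderiv h z (hd z)) /\
    subordinate (starlike_quot h hd) (strong_fun beta).

(* f in S*_{Sigma,beta}, with f(z) = sum a_n z^n on U, a_0 = 0, a_1 = 1;
   g = f^{-1} extends to an analytic univalent function on U (g is the
   inverse of f near 0). *)
Definition strongly_bistarlike (beta : R) (f : Cplx -> Cplx) (a : nat -> Cplx) : Prop :=
  a O = C0 /\ a 1%nat = C1 /\
  (forall z, inU z -> ps_sum a z (f z)) /\
  univalent_U f /\
  exists g : Cplx -> Cplx,
    analytic_U g /\ univalent_U g /\
    (exists r, 0 < r /\ forall w, Cnorm w < r -> inU (g w) /\ f (g w) = w) /\
    strongly_starlike_cond beta f /\ strongly_starlike_cond beta g.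

(* Main.v *)
From Stdlib Require Import Reals Lra Lia Psatz Ring Field.
From Coquelicot Require Import Coquelicot.
Require Import Defs.
Open Scope R_scope.

Lemma taylor_bnd (F dF : R -> R) (rho K : R) (n : nat) :
  0 <= K ->
  (forall c, Rabs c <= rho -> is_derive F c (dF c)) ->
  (forall c, Rabs c <= rho -> Rabs (dF c) <= K * Rabs c ^ n) ->
  F 0 = 0 -> forall x, Rabs x <= rho -> Rabs (F x) <= K * Rabs x ^ (S n).
Proof.
  intros HK Hd Hb H0 x Hx.
  destruct (MVT_cor4 F dF 0 rho) with (b := x) as [c [Hc1 Hc2]].
  - intros c Hc. apply Hd. rewrite Rminus_0_r in Hc. exact Hc.
  - rewrite Rminus_0_r; exact Hx.
  - rewrite H0, !Rminus_0_r in Hc1. rewrite !Rminus_0_r in Hc2.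
    rewrite Hc1, Rabs_mult.
    assert (Hc : Rabs c <= rho) by lra.
    specialize (Hb c Hc).
    simpl. 
    assert (Rabs c ^ n <= Rabs x ^ n) by (apply pow_incr; split; [apply Rabs_pos|exact Hc2]).
    assert (0 <= Rabs x) by apply Rabs_pos.
    assert (0 <= Rabs c ^ n) by (apply pow_le, Rabs_pos).
    assert (K * Rabs c ^ n <= K * Rabs x ^ n) by (apply Rmult_le_compat_l; auto).
    nra.
Qed.

Lemma exp_b1 : forall x, Rabs x <= 1 -> Rabs (exp x - 1) <= 3 * Rabs x ^ 1.
Proof.
  intros x Hx. apply (taylor_bnd (fun x => exp x - 1) exp 1 3 0); try lra.
  - intros c _. auto_derive; auto; ring.
  - intros c Hc. simpl. rewrite Rmult_1_r, Rabs_pos_eq by (left; apply exp_pos).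
    apply Rle_trans with (exp 1). destruct (Rle_lt_or_eq_dec c 1).
    { apply Rabs_le_between in Hc; lra. } apply exp_increasing in r; lra. subst; lra.
    pose proof exp_le_3; lra.
  - rewrite exp_0; ring.
Qed.
Lemma exp_b2 : forall x, Rabs x <= 1 -> Rabs (exp x - 1 - x) <= 3 * Rabs x ^ 2.
Proof.
  intros x Hx. apply (taylor_bnd (fun x => exp x - 1 - x) (fun x => exp x - 1) 1 3 1); try lra.
  - intros c _. auto_derive; auto; ring.
  - intros c Hc. apply exp_b1; auto.
  - rewrite exp_0; ring.
Qed.
Lemma exp_b3 : forall x, Rabs x <= 1 -> Rabs (exp x - 1 - x - x^2/2) <= 3 * Rabs x ^ 3.
Proof.
  intros x Hx. apply (taylor_bnd (fun x => exp x - 1 - x - x^2/2) (fun x => exp x - 1 - x) 1 3 2); try lra.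
  - intros c _. auto_derive; auto; field.
  - intros c Hc. apply exp_b2; auto.
  - rewrite exp_0; field.
Qed.

Lemma sin_b0 : forall x, Rabs (sin x) <= 1 * Rabs x ^ 1.
Proof.
  intros x. apply (taylor_bnd sin cos (Rabs x) 1 0 ltac:(lra)); try lra.
  - intros c _. apply is_derive_sin.
  - intros c _. simpl. pose proof (COS_bound c). apply Rabs_le; lra.
  - apply sin_0.
Qed.
Lemma cos_b1 : forall x, Rabs (cos x - 1) <= 1 * Rabs x ^ 2.
Proof.
  intros x. apply (taylor_bnd (fun x => cos x - 1) (fun x => - sin x) (Rabs x) 1 1 ltac:(lra)); try lra.
  - intros c _. auto_derive; auto; ring.
  - intros c _. rewrite Rabs_Ropp. apply sin_b0.
  - rewrite cos_0; ring.
Qed.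
Lemma sin_b2 : forall x, Rabs (sin x - x) <= 1 * Rabs x ^ 3.
Proof.
  intros x. apply (taylor_bnd (fun x => sin x - x) (fun x => cos x - 1) (Rabs x) 1 2 ltac:(lra)); try lra.
  - intros c _. auto_derive; auto; ring.
  - intros c _. apply cos_b1.
  - rewrite sin_0; ring.
Qed.
Lemma cos_b3 : forall x, Rabs (cos x - 1 + x^2/2) <= 1 * Rabs x ^ 4.
Proof.
  intros x. apply (taylor_bnd (fun x => cos x - 1 + x^2/2) (fun x => - (sin x - x)) (Rabs x) 1 3 ltac:(lra)); try lra.
  - intros c _. auto_derive; auto; field.
  - intros c _. rewrite Rabs_Ropp. apply sin_b2.
  - rewrite cos_0; field.
Qed.

Lemma ln_b : forall x, Rabs x <= 1/2 -> Rabs (ln (1 + x) - x + x^2/2) <= 2 * Rabs x ^ 3.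
Proof.
  intros x Hx. apply (taylor_bnd (fun x => ln (1 + x) - x + x^2/2) (fun x => x^2/(1+x)) (1/2) 2 2); try lra.
  - intros c Hc. apply Rabs_le_between in Hc. auto_derive. lra. field. lra.
  - intros c Hc. apply Rabs_le_between in Hc as Hc'.
    rewrite Rabs_div by lra. rewrite (Rabs_pos_eq (1+c)) by lra.
    rewrite <- RPow_abs. apply Rmult_le_reg_r with (1 + c). lra.
    unfold Rdiv. rewrite Rmult_assoc, Rinv_l by lra. 
    assert (0 <= Rabs c ^ 2) by (apply pow_le, Rabs_pos). nra.
  - rewrite Rplus_0_r, ln_1; field.
Qed.

Lemma atan_b : forall x, Rabs (atan x - x) <= 1 * Rabs x ^ 3.
Proof.
  intros x. apply (taylor_bnd (fun x => atan x - x) (fun x => - x^2/(1+x^2)) (Rabs x) 1 2 ltac:(lra)); try lra.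
  - intros c _. auto_derive. auto. field. nra.
  - intros c _. assert (0 < 1 + c^2) by nra. 
    rewrite Rabs_div by lra. rewrite (Rabs_pos_eq (1+c^2)) by lra.
    rewrite Rabs_Ropp, <- RPow_abs. apply Rmult_le_reg_r with (1 + c^2). lra.
    unfold Rdiv. rewrite Rmult_assoc, Rinv_l by lra.
    assert (0 <= Rabs c ^ 2) by (apply pow_le, Rabs_pos). nra.
  - rewrite atan_0; ring.
Qed.

Lemma Rabs_add_le x y a b : Rabs x <= a -> Rabs y <= b -> Rabs (x + y) <= a + b.
Proof. intros. eapply Rle_trans. apply Rabs_triang. lra. Qed.
Lemma Rabs_sub_le x y a b : Rabs x <= a -> Rabs y <= b -> Rabs (x - y) <= a + b.
Proof. intros. eapply Rle_trans. apply Rabs_triang. rewrite Rabs_Ropp. lra. Qed.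
Lemma Rabs_mul_le x y a b : Rabs x <= a -> Rabs y <= b -> Rabs (x * y) <= a * b.
Proof. intros. rewrite Rabs_mult. pose proof (Rabs_pos x); pose proof (Rabs_pos y).
  apply Rmult_le_compat; auto. Qed.
Lemma Rabs_opp_le x a : Rabs x <= a -> Rabs (- x) <= a.
Proof. rewrite Rabs_Ropp; auto. Qed.

Ltac bnd := first
  [ eassumption
  | eapply Rabs_add_le; [bnd|bnd]
  | eapply Rabs_sub_le; [bnd|bnd]
  | eapply Rabs_mul_le; [bnd|bnd]
  | eapply Rabs_opp_le; bnd
  | apply Rle_refl ].

Lemma Cmod_le_sum (z : C) : Cmod z <= Rabs (fst z) + Rabs (snd z).
Proof.
  unfold Cmod. rewrite <- (sqrt_Rsqr (Rabs (fst z) + Rabs (snd z))).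
  2:{ pose proof (Rabs_pos (fst z)); pose proof (Rabs_pos (snd z)); lra. }
  apply sqrt_le_1_alt. unfold Rsqr.
  pose proof (Rabs_pos (fst z)); pose proof (Rabs_pos (snd z)).
  rewrite <- (pow2_abs (fst z)), <- (pow2_abs (snd z)). nra.
Qed.
Lemma fst_le_Cmod (z : C) : Rabs (fst z) <= Cmod z.
Proof. pose proof (Rmax_Cmod z). pose proof (Rmax_l (Rabs (fst z)) (Rabs (snd z))). lra. Qed.
Lemma snd_le_Cmod (z : C) : Rabs (snd z) <= Cmod z.
Proof. pose proof (Rmax_Cmod z). pose proof (Rmax_r (Rabs (fst z)) (Rabs (snd z))). lra. Qed.
Lemma Cmod_sq (z : C) : Cmod z ^ 2 = fst z ^ 2 + snd z ^ 2.
Proof. unfold Cmod. rewrite pow2_sqrt; auto. nra. Qed.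

Lemma ln_sqrt S : 0 < S -> ln (sqrt S) = ln S / 2.
Proof.
  intros H. assert (Hs : 0 < sqrt S) by (apply sqrt_lt_R0; auto).
  rewrite <- (sqrt_sqrt S) at 2 by lra. rewrite ln_mult by auto. field.
Qed.

Lemma Cexp_re a b s : Rabs a <= s -> Rabs b <= s -> s <= 1/2 ->
  Rabs (exp a * cos b - (1 + a + (a^2 - b^2)/2)) <= 5 * s^3.
Proof.
  intros Ha Hb Hs.
  assert (H0 : 0 <= s) by (pose proof (Rabs_pos a); lra).
  pose proof (exp_b3 a ltac:(lra)) as E3.
  pose proof (cos_b3 b) as C4.
  assert (Hcb : Rabs (cos b) <= 1) by (apply Rabs_le; pose proof (COS_bound b); lra).
  replace (exp a * cos b - (1 + a + (a^2 - b^2)/2)) with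
    ((exp a - 1 - a - a^2/2) * cos b + (1 + a + a^2/2) * (cos b - 1 + b^2/2)
      - (a + a^2/2) * (b^2/2)) by field.
  assert (Ha3 : Rabs a ^ 3 <= s^3) by (apply pow_incr; split; [apply Rabs_pos|auto]).
  assert (Hb4 : Rabs b ^ 4 <= s^4) by (apply pow_incr; split; [apply Rabs_pos|auto]).
  assert (Hq : Rabs (1 + a + a^2/2) <= 2).
  { apply Rabs_le. apply Rabs_le_between in Ha. nra. }
  assert (Hr : Rabs ((a + a^2/2) * (b^2/2)) <= s^3).
  { rewrite Rabs_mult. assert (Rabs (a + a^2/2) <= 2 * s).
    { apply Rabs_le. apply Rabs_le_between in Ha. nra. }
    assert (Rabs (b^2/2) <= s^2/2).
    { rewrite Rabs_pos_eq by nra. rewrite <- (pow2_abs b). 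
      pose proof (Rabs_pos b). nra. }
    pose proof (Rabs_pos (a + a^2/2)). pose proof (Rabs_pos (b^2/2)). nra. }
  eapply Rle_trans. bnd.
  assert (s^4 <= s^3/2) by (replace (s^4) with (s*s^3) by ring; assert (0<= s^3) by (apply pow_le; lra); nra).
  lra.
Qed.

Lemma Cexp_im a b s : Rabs a <= s -> Rabs b <= s -> s <= 1/2 ->
  Rabs (exp a * sin b - (b + a * b)) <= 6 * s^3.
Proof.
  intros Ha Hb Hs.
  assert (H0 : 0 <= s) by (pose proof (Rabs_pos a); lra).
  pose proof (exp_b2 a ltac:(lra)) as E2.
  pose proof (sin_b2 b) as S3.
  assert (He : Rabs (exp a) <= 3).
  { rewrite Rabs_pos_eq by (left; apply exp_pos).
    pose proof (exp_b1 a ltac:(lra)) as H1. apply Rabs_le_between in H1.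
    simpl in H1. lra. }
  replace (exp a * sin b - (b + a * b)) with
    ((exp a - 1 - a) * b + exp a * (sin b - b)) by ring.
  assert (Ha2 : Rabs a ^ 2 <= s^2) by (apply pow_incr; split; [apply Rabs_pos|auto]).
  assert (Hb3 : Rabs b ^ 3 <= s^3) by (apply pow_incr; split; [apply Rabs_pos|auto]).
  eapply Rle_trans. bnd.
  pose proof (Rabs_pos b). nra.
Qed.

Definition ptarget (beta : R) (z : Cplx) : Cplx :=
  Cadd C1 (Cadd (Cmul (RtoC (2*beta)) z) (Cmul (RtoC (2*beta^2)) (Cmul z z))).

Lemma q_fst (z : Cplx) : (1 - fst z)^2 + snd z ^2 <> 0 ->
  fst (Defs.Cdiv (Cadd C1 z) (Csub C1 z)) = (1 - fst z ^2 - snd z^2)/((1 - fst z)^2 + snd z ^2).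
Proof. intros H. destruct z as [x y]; unfold Defs.Cdiv, Cmul, Defs.Cinv, Cadd, Csub, Copp, C1; simpl in *. field; contradict H; nra. Qed.
Lemma q_snd (z : Cplx) : (1 - fst z)^2 + snd z ^2 <> 0 ->
  snd (Defs.Cdiv (Cadd C1 z) (Csub C1 z)) = 2 * snd z/((1 - fst z)^2 + snd z ^2).
Proof. intros H. destruct z as [x y]; unfold Defs.Cdiv, Cmul, Defs.Cinv, Cadd, Csub, Copp, C1; simpl in *. field; contradict H; nra. Qed.

Lemma Arg_pos (u : Cplx) : 0 < fst u -> Arg u = atan (snd u / fst u).
Proof. intros H. unfold Arg. destruct (Rlt_dec 0 (fst u)); [reflexivity|lra]. Qed.

Lemma p_expand (beta : R) : 0 < beta <= 1 -> forall z : Cplx, Cnorm z <= 1/8 ->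
  Cnorm (Csub (strong_fun beta z) (ptarget beta z)) <= 500 * Cnorm z ^ 3.
Proof.
  intros Hb z Hz.
  change (Cnorm z) with (Cmod z) in *.
  set (r := Cmod z) in *.
  pose proof (fst_le_Cmod z) as Hx. pose proof (snd_le_Cmod z) as Hy.
  pose proof (Cmod_sq z) as Hr2. fold r in Hx, Hy, Hr2.
  destruct z as [x y]; simpl fst in *; simpl snd in *.
  assert (Hr0 : 0 <= r) by (apply Cmod_ge_0).
  apply Rabs_le_between in Hx as Hx'. apply Rabs_le_between in Hy as Hy'.
  set (D := (1 - x)^2 + y^2).
  set (E := (1 + x)^2 + y^2).
  assert (HD : 0 < D) by (unfold D; assert (1 - x >= 7/8) by lra; nra).
  assert (HE : 0 < E) by (unfold E; assert (1 + x >= 7/8) by lra; nra).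
  set (q := Defs.Cdiv (Cadd C1 (x,y)) (Csub C1 (x,y))).
  assert (Hq1 : fst q = (1 - x^2 - y^2)/D) by (apply (q_fst (x,y)); apply Rgt_not_eq; cbn [fst snd]; fold D; lra).
  assert (Hq2 : snd q = 2 * y / D) by (apply (q_snd (x,y)); apply Rgt_not_eq; cbn [fst snd]; fold D; lra).
  assert (Hq1p : 0 < fst q) by (rewrite Hq1; apply Rdiv_lt_0_compat; nra).
  assert (HL : ln (Cnorm q) = (ln E - ln D) / 2).
  { unfold Cnorm. rewrite ln_sqrt. 2:{ nra. }
    replace (fst q ^ 2 + snd q ^ 2) with (E / D).
    2:{ rewrite Hq1, Hq2. unfold E, D. field. fold D; apply Rgt_not_eq; lra. }
    rewrite ln_div; auto. }
  set (s1 := 2*x + r^2). set (s2 := -2*x + r^2).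
  assert (Es1 : E = 1 + s1) by (unfold E, s1; rewrite Hr2; ring).
  assert (Ds2 : D = 1 + s2) by (unfold D, s2; rewrite Hr2; ring).
  assert (Hs1 : Rabs s1 <= 3 * r) by (unfold s1; apply Rabs_le; nra).
  assert (Hs2 : Rabs s2 <= 3 * r) by (unfold s2; apply Rabs_le; nra).
  pose proof (ln_b s1 ltac:(lra)) as e1. pose proof (ln_b s2 ltac:(lra)) as e2.
  assert (Hs13 : Rabs s1 ^ 3 <= (3*r)^3) by (apply pow_incr; split; [apply Rabs_pos|auto]).
  assert (Hs23 : Rabs s2 ^ 3 <= (3*r)^3) by (apply pow_incr; split; [apply Rabs_pos|auto]).
  assert (HL1 : Rabs (ln (Cnorm q) - 2 * x) <= 56 * r^3).
  { rewrite HL, Es1, Ds2.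
    replace ((ln (1 + s1) - ln (1 + s2)) / 2 - 2 * x) with
      ((ln (1 + s1) - s1 + s1^2/2) / 2 - (ln (1 + s2) - s2 + s2^2/2)/2 + (- 2 * x * r^2))
      by (unfold s1, s2; field).
    assert (Rabs (- 2 * x * r^2) <= 2 * r^3).
    { assert (0 <= r^2) by nra. apply Rabs_le; split; nra. }
    assert (Rabs ((ln (1 + s1) - s1 + s1^2/2) / 2) <= 27 * r^3).
    { unfold Rdiv. rewrite Rabs_mult, (Rabs_pos_eq (/2)) by lra. nra. }
    assert (Rabs ((ln (1 + s2) - s2 + s2^2/2) / 2) <= 27 * r^3).
    { unfold Rdiv. rewrite Rabs_mult, (Rabs_pos_eq (/2)) by lra. nra. }
    eapply Rle_trans. bnd. lra. }
  assert (HA : Arg q = atan (2 * y / (1 - r^2))).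
  { rewrite Arg_pos by auto. f_equal. rewrite Hq1, Hq2, Hr2. assert (x^2 + y^2 <= 1/64) by nra. field. repeat split; apply Rgt_not_eq; first [fold D; lra | nra]. }
  set (s3 := 2 * y / (1 - r^2)).
  assert (Hr2s : r^2 <= 1/64) by nra.
  assert (Hs3 : Rabs s3 <= 3 * r).
  { unfold s3. rewrite Rabs_div by nra. rewrite Rabs_mult, (Rabs_pos_eq 2) by lra.
    rewrite (Rabs_pos_eq (1 - r^2)) by nra. apply Rmult_le_reg_r with (1 - r^2). nra.
    unfold Rdiv. rewrite Rmult_assoc, Rinv_l by nra. nra. }
  assert (HA1 : Rabs (Arg q - 2 * y) <= 30 * r^3).
  { rewrite HA. fold s3.
    replace (atan s3 - 2 * y) with ((atan s3 - s3) + (s3 - 2*y)) by ring.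
    pose proof (atan_b s3) as e3.
    assert (Rabs s3 ^ 3 <= (3*r)^3) by (apply pow_incr; split; [apply Rabs_pos|auto]).
    assert (Rabs (s3 - 2*y) <= 3 * r^3).
    { unfold s3. replace (2 * y / (1 - r ^ 2) - 2 * y) with (2 * y * r^2 / (1 - r^2))
        by (field; nra).
      rewrite Rabs_div by nra. rewrite !Rabs_mult, (Rabs_pos_eq 2) by lra.
      rewrite (Rabs_pos_eq (1 - r^2)) by nra. rewrite (Rabs_pos_eq (r^2)) by nra.
      apply Rmult_le_reg_r with (1 - r^2). nra.
      unfold Rdiv. rewrite Rmult_assoc, Rinv_l by nra. 
      assert (0 <= r^2) by nra. assert (Rabs y * r^2 <= r * r^2) by (apply Rmult_le_compat_r; lra). assert (r^3 = r * r^2) by ring. assert (0 <= r^3) by nra. nra. }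
    eapply Rle_trans. bnd. nra. }
  set (a := beta * ln (Cnorm q)). set (b := beta * Arg q).
  assert (Ha1 : Rabs (a - 2 * beta * x) <= 56 * r^3).
  { unfold a. replace (beta * ln (Cnorm q) - 2 * beta * x) with (beta * (ln (Cnorm q) - 2 * x)) by ring.
    rewrite Rabs_mult, (Rabs_pos_eq beta) by lra.
    pose proof (Rabs_pos (ln (Cnorm q) - 2 * x)). nra. }
  assert (Hb1 : Rabs (b - 2 * beta * y) <= 30 * r^3).
  { unfold b. replace (beta * Arg q - 2 * beta * y) with (beta * (Arg q - 2 * y)) by ring.
    rewrite Rabs_mult, (Rabs_pos_eq beta) by lra.
    pose proof (Rabs_pos (Arg q - 2 * y)). nra. }
  assert (Hr3 : r^3 <= r / 64) by nra.
  assert (Ha : Rabs a <= 3 * r).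
  { replace a with ((a - 2*beta*x) + 2 * beta * x) by ring.
    eapply Rle_trans. apply Rabs_triang. rewrite Rabs_mult, (Rabs_pos_eq (2*beta)) by lra. nra. }
  assert (Hbb : Rabs b <= 3 * r).
  { replace b with ((b - 2*beta*y) + 2 * beta * y) by ring.
    eapply Rle_trans. apply Rabs_triang. rewrite Rabs_mult, (Rabs_pos_eq (2*beta)) by lra. nra. }
  pose proof (Cexp_re a b (3*r) Ha Hbb ltac:(lra)) as Xre.
  pose proof (Cexp_im a b (3*r) Ha Hbb ltac:(lra)) as Xim.
  unfold strong_fun. fold q. unfold Cpowr, Defs.Cexp. fold a b.
  change (Cnorm ?u) with (Cmod u).
  eapply Rle_trans. apply Cmod_le_sum.
  unfold ptarget, Csub, Cadd, Copp, Cmul, C1. simpl fst; simpl snd.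
  assert (Hre : Rabs (exp a * cos b - (1 + (2 * beta * x - 0 * y + ((2 * beta ^ 2) * (x * x - y * y) - 0 * (x * y + y * x))))) <= 247 * r^3).
  { replace (exp a * cos b - (1 + (2 * beta * x - 0 * y + ((2 * beta ^ 2) * (x * x - y * y) - 0 * (x * y + y * x)))))
      with ((exp a * cos b - (1 + a + (a^2 - b^2)/2)) + (a - 2 * beta * x)
            + ((a - 2*beta*x)*(a + 2*beta*x) - (b - 2*beta*y)*(b + 2 * beta * y))/2) by field.
    assert (Rabs (a + 2*beta*x) <= 5 * r) by (apply Rabs_le; apply Rabs_le_between in Ha; nra).
    assert (Rabs (b + 2*beta*y) <= 5 * r) by (apply Rabs_le; apply Rabs_le_between in Hbb; nra).
    assert (Rabs (((a - 2*beta*x)*(a + 2*beta*x) - (b - 2*beta*y)*(b + 2 * beta * y))/2) <= 56 * r^3).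
    { unfold Rdiv. rewrite Rabs_mult, (Rabs_pos_eq (/2)) by lra.
      assert (Rabs ((a - 2*beta*x)*(a + 2*beta*x) - (b - 2*beta*y)*(b + 2 * beta * y)) <= 56 * r^3 * (5 * r) + 30 * r^3 * (5*r)) by bnd.
      nra. }
    eapply Rle_trans. bnd. nra. }
  assert (Him : Rabs (exp a * sin b - (0 + (2 * beta * y + 0 * x + ((2 * beta ^ 2) * (x * y + y * x) + 0 * (x * x - y * y))))) <= 248 * r^3).
  { replace (exp a * sin b - (0 + (2 * beta * y + 0 * x + ((2 * beta ^ 2) * (x * y + y * x) + 0 * (x * x - y * y)))))
      with ((exp a * sin b - (b + a * b)) + (b - 2 * beta * y)
            + ((a - 2*beta*x) * b + (2 * beta * x) * (b - 2 * beta * y))) by field.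
    assert (Rabs (2 * beta * x) <= 2 * r) by (apply Rabs_le; nra).
    assert (Rabs ((a - 2*beta*x) * b + (2 * beta * x) * (b - 2 * beta * y)) <= 56 * r^3 * (3 * r) + 2 * r * (30 * r^3)) by bnd.
    eapply Rle_trans. bnd. nra. }
  eapply Rle_trans; [apply Rplus_le_compat; [exact Hre | exact Him]|]; assert (0 <= r^3) by (apply pow_le; lra); lra.
Qed.

Lemma Cmod_sub_le (x y : C) : Cmod (x - y)%C <= Cmod x + Cmod y.
Proof. eapply Rle_trans. apply Cmod_triangle. rewrite Cmod_opp. lra. Qed.
Lemma Cmod_triang3 (x y z : C) : Cmod (x - z)%C <= Cmod (x - y)%C + Cmod (y - z)%C.
Proof. replace (x - z)%C with ((x - y) + (y - z))%C by ring. apply Cmod_triangle. Qed.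
Lemma Cmod_sym (x y : C) : Cmod (x - y)%C = Cmod (y - x)%C.
Proof. replace (x - y)%C with (- (y - x))%C by ring. apply Cmod_opp. Qed.

Lemma sum_ge_term (f : nat -> R) N n : (forall k, 0 <= f k) -> (n <= N)%nat -> f n <= sum_f_R0 f N.
Proof.
  intros Hf. induction N; intros Hn.
  - replace n with 0%nat by lia. simpl. lra.
  - destruct (Nat.eq_dec n (S N)).
    + subst. simpl. pose proof (cond_pos_sum f N) as H.
      assert (0 <= sum_f_R0 f N).
      { clear -Hf. induction N; simpl; auto. specialize (Hf (S N)). lra. }
      lra.
    + simpl. specialize (IHN ltac:(lia)). specialize (Hf (S N)). lra.
Qed.

Lemma psum_S c z n : psum c z (S n) = (psum c z n + c (S n) * z ^ (S n))%C.
Proof. reflexivity. Qed.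

Lemma psum_0 c n : psum c (RtoC 0) n = c O.
Proof.
  induction n; simpl.
  - change (c O * RtoC 1 = c O)%C. ring.
  - rewrite IHn. change (c O + c (S n) * (RtoC 0 * Defs.Cpow (RtoC 0) n) = c O)%C. ring.
Qed.



Lemma lim_le (u : nat -> C) (s : C) (v : C) (B : R) :
  (forall eps, 0 < eps -> exists N, forall n, (N <= n)%nat -> Cmod (u n - s)%C < eps) ->
  (forall N, exists n, (N <= n)%nat /\ Cmod (u n - v)%C <= B) -> Cmod (s - v)%C <= B.
Proof.
  intros Hu Hv. apply Rle_plus_epsilon. intros eps He.
  destruct (Hu eps He) as [N HN]. destruct (Hv N) as [n [Hn Hb]].
  specialize (HN n Hn). eapply Rle_trans. apply (Cmod_triang3 s (u n) v).
  rewrite Cmod_sym. lra.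
Qed.

Lemma ps_sum_0 c s : ps_sum c (RtoC 0) s -> s = c O.
Proof.
  intros H. assert (H0 : (s - c O)%C = RtoC 0).
  { apply Cmod_eq_0. apply Rle_antisym; [|apply Cmod_ge_0].
    apply (lim_le (psum c (RtoC 0)) s (c O) 0 H).
    intros N. exists N. split; [lia|]. rewrite psum_0. 
    replace (c O - c O)%C with (RtoC 0) by ring. rewrite Cmod_0. lra. }
  change (@eq C s (c O)). replace s with ((s - c O) + c O)%C by ring. rewrite H0. ring.
Qed.

Lemma coef_bound c h (R0 : R) : 0 < R0 < 1 ->
  (forall z, inU z -> ps_sum c z (h z)) ->
  exists M, 0 <= M /\ forall n, Cmod (c n) * R0 ^ n <= M.
Proof.
  intros HR Hs. set (z0 := RtoC R0).
  assert (Hz0 : Cmod z0 = R0) by (unfold z0; rewrite Cmod_R; apply Rabs_pos_eq; lra).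
  assert (Hin : inU z0) by (unfold inU; change (Cmod z0 < 1); lra).
  destruct (Hs z0 Hin 1 ltac:(lra)) as [N HN].
  set (f := fun k => Cmod (c k) * R0 ^ k).
  assert (Hf : forall k, 0 <= f k) by (intros; unfold f; apply Rmult_le_pos; [apply Cmod_ge_0|apply pow_le; lra]).
  exists (2 + sum_f_R0 f N). split.
  { pose proof (sum_ge_term f N 0 Hf ltac:(lia)). specialize (Hf O). lra. }
  intros n. fold (f n). destruct (Compare_dec.le_lt_dec n N) as [Hn|Hn].
  - pose proof (sum_ge_term f N n Hf Hn). lra.
  - destruct n as [|m]; [lia|].
    assert (Hm : (N <= m)%nat) by lia.
    pose proof (HN m Hm) as A. pose proof (HN (S m) ltac:(lia)) as B.
    change (Cnorm ?u) with (Cmod u) in A, B. rewrite psum_S in B.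
    assert (f (S m) = Cmod (c (S m) * z0 ^ S m)%C).
    { unfold f. rewrite Cmod_mult, Cmod_pow, Hz0. reflexivity. }
    assert (Cmod (c (S m) * z0 ^ S m)%C <= 2).
    { replace (c (S m) * z0 ^ S m)%C with ((psum c z0 m + c (S m) * z0 ^ S m - h z0) - (psum c z0 m - h z0))%C by ring.
      eapply Rle_trans. apply Cmod_sub_le. change (Csub ?a ?b) with (Cminus a b) in A, B. lra. }
    pose proof (sum_ge_term f N 0 Hf ltac:(lia)). specialize (Hf O). lra.
Qed.

Lemma psum_tail c z M R0 m d : 0 < R0 -> 0 <= M -> (forall n, Cmod (c n) * R0 ^ n <= M) ->
  Cmod z < R0 ->
  Cmod (psum c z (m + d) - psum c z m)%C <=
    M * (Cmod z / R0) ^ (S m) * (1 - (Cmod z / R0) ^ d) / (1 - Cmod z / R0).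
Proof.
  intros HR HM Hc Hz. set (q := Cmod z / R0).
  assert (Hq0 : 0 <= q) by (unfold q; apply Rdiv_le_0_compat; [apply Cmod_ge_0|lra]).
  assert (Hq1 : q < 1) by (unfold q; apply Rmult_lt_reg_r with R0; [lra|]; unfold Rdiv; rewrite Rmult_assoc, Rinv_l; lra).
  induction d.
  - rewrite Nat.add_0_r. replace (psum c z m - psum c z m)%C with (RtoC 0) by ring.
    rewrite Cmod_0. simpl. unfold Rdiv. replace (1 - 1) with 0 by ring. rewrite Rmult_0_r, Rmult_0_l. lra.
  - rewrite Nat.add_succ_r, psum_S.
    replace (psum c z (m + d) + c (S (m + d)) * z ^ S (m + d) - psum c z m)%C
      with ((psum c z (m + d) - psum c z m) + c (S (m + d)) * z ^ S (m + d))%C by ring.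
    eapply Rle_trans. apply Cmod_triangle.
    assert (Ht : Cmod (c (S (m + d)) * z ^ S (m + d))%C <= M * q ^ (S (m + d))).
    { rewrite Cmod_mult, Cmod_pow. 
      replace (Cmod z) with (q * R0) by (unfold q; field; lra).
      rewrite Rpow_mult_distr. specialize (Hc (S (m + d))).
      assert (0 <= q ^ S (m + d)) by (apply pow_le; lra).
      replace (Cmod (c (S (m + d))) * (q ^ S (m + d) * R0 ^ S (m + d))) with
        (q ^ S (m + d) * (Cmod (c (S (m + d))) * R0 ^ S (m + d))) by ring.
      rewrite (Rmult_comm M). apply Rmult_le_compat_l; auto. }
    eapply Rle_trans. apply Rplus_le_compat. exact IHd. exact Ht.
    right. replace (S (m + d)) with (S m + d)%nat by lia. rewrite pow_add. simpl. field. lra.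
Qed.

Lemma ps_tail c h z M R0 m : 0 < R0 -> 0 <= M -> (forall n, Cmod (c n) * R0 ^ n <= M) ->
  Cmod z < R0 -> ps_sum c z (h z) ->
  Cmod (h z - psum c z m)%C <= M * (Cmod z / R0) ^ (S m) / (1 - Cmod z / R0).
Proof.
  intros HR HM Hc Hz Hs. set (q := Cmod z / R0).
  assert (Hq0 : 0 <= q) by (unfold q; apply Rdiv_le_0_compat; [apply Cmod_ge_0|lra]).
  assert (Hq1 : q < 1) by (unfold q; apply Rmult_lt_reg_r with R0; [lra|]; unfold Rdiv; rewrite Rmult_assoc, Rinv_l; lra).
  apply (lim_le (psum c z) (h z) (psum c z m)).
  { intros eps He. destruct (Hs eps He) as [N HN]. exists N. intros n Hn. apply HN; auto. }
  intros N. exists (m + N)%nat. split; [lia|].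
  eapply Rle_trans. apply (psum_tail c z M R0 m N); auto. fold q.
  unfold Rdiv. apply Rmult_le_compat_r. left; apply Rinv_0_lt_compat; lra.
  assert (0 <= q ^ N) by (apply pow_le; lra).
  assert (0 <= M * q ^ S m) by (apply Rmult_le_pos; auto; apply pow_le; lra).
  nra.
Qed.

Lemma ps_local c h M m : 0 <= M -> (forall n, Cmod (c n) * (1/2) ^ n <= M) ->
  (forall z, inU z -> ps_sum c z (h z)) ->
  forall z, Cmod z <= 1/4 -> Cmod (h z - psum c z m)%C <= (M * 2 ^ (m + 2)) * Cmod z ^ (S m).
Proof.
  intros HM Hc Hs z Hz.
  assert (Hz0 : 0 <= Cmod z) by apply Cmod_ge_0.
  eapply Rle_trans. apply (ps_tail c h z M (1/2) m); auto; try lra.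
  apply Hs. unfold inU. change (Cmod z < 1). lra.
  replace (Cmod z / (1/2)) with (2 * Cmod z) by field.
  rewrite Rpow_mult_distr.
  assert (0 <= Cmod z ^ S m) by (apply pow_le; lra).
  assert (0 < 2 ^ S m) by (apply pow_lt; lra).
  apply Rmult_le_reg_r with (1 - 2 * Cmod z). lra.
  unfold Rdiv. rewrite Rmult_assoc, Rinv_l by lra. rewrite Rmult_1_r.
  replace (m + 2)%nat with (S (S m)) by lia. simpl.
  assert (0 <= M * (2 ^ m * Cmod z ^ S m)) by (apply Rmult_le_pos; auto; apply Rmult_le_pos; auto; apply pow_le; lra).
  simpl in *. nra.
Qed.

Ltac ceq := apply injective_projections; simpl; ring.

Lemma pow_diff (z1 z2 : C) s k : Cmod z1 <= s -> Cmod z2 <= s ->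
  Cmod (z1 ^ (S k) - z2 ^ (S k))%C <= INR (S k) * s ^ k * Cmod (z1 - z2)%C.
Proof.
  intros H1 H2. assert (Hs : 0 <= s) by (pose proof (Cmod_ge_0 z1); lra).
  induction k.
  - simpl. replace (z1 * 1 - z2 * 1)%C with (z1 - z2)%C by ring. lra.
  - replace (z1 ^ S (S k) - z2 ^ S (S k))%C with (z1 * (z1 ^ S k - z2 ^ S k) + (z1 - z2) * z2 ^ S k)%C
      by (simpl; ring).
    eapply Rle_trans. apply Cmod_triangle. rewrite !Cmod_mult, Cmod_pow.
    assert (Cmod z2 ^ S k <= s ^ S k) by (apply pow_incr; split; [apply Cmod_ge_0|auto]).
    assert (0 <= Cmod (z1 - z2)%C) by apply Cmod_ge_0.
    assert (0 <= Cmod (z1 ^ S k - z2 ^ S k)%C) by apply Cmod_ge_0.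
    assert (Cmod z1 * Cmod (z1 ^ S k - z2 ^ S k)%C <= s * (INR (S k) * s ^ k * Cmod (z1 - z2)%C)).
    { apply Rmult_le_compat; auto. apply Cmod_ge_0. }
    assert (Cmod (z1 - z2)%C * Cmod z2 ^ S k <= Cmod (z1 - z2)%C * s ^ S k) by (apply Rmult_le_compat_l; auto).
    rewrite !S_INR in *. simpl in *. nra.
Qed.

Lemma tail_lip c h M : 0 <= M -> (forall n, Cmod (c n) * (1/2) ^ n <= M) ->
  (forall z, inU z -> ps_sum c z (h z)) ->
  forall z1 z2 s, Cmod z1 <= s -> Cmod z2 <= s -> s <= 1/4 ->
  Cmod ((h z1 - psum c z1 3) - (h z2 - psum c z2 3))%C <= 160 * M * s ^ 3 * Cmod (z1 - z2)%C.
Proof.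
  intros HM Hc Hs z1 z2 s H1 H2 Hs4.
  assert (Hs0 : 0 <= s) by (pose proof (Cmod_ge_0 z1); lra).
  set (x := 2 * s). set (dz := Cmod (z1 - z2)%C).
  assert (Hdz : 0 <= dz) by apply Cmod_ge_0.
  assert (Hind : forall d, Cmod ((psum c z1 (3 + d) - psum c z1 3) - (psum c z2 (3 + d) - psum c z2 3))%C
     <= 2 * M * x ^ 3 * (10 - 2 * (INR d + 5) / 2 ^ d) * dz).
  { induction d.
    - rewrite Nat.add_0_r. replace ((psum c z1 3 - psum c z1 3) - (psum c z2 3 - psum c z2 3))%C with (RtoC 0) by ring.
      rewrite Cmod_0. simpl. right. field.
    - replace (3 + S d)%nat with (S (3 + d)) by lia. rewrite (psum_S c z1 (3+d)), (psum_S c z2 (3+d)).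
      replace ((psum c z1 (3 + d) + c (S (3 + d)) * z1 ^ S (3 + d) - psum c z1 3) -
               (psum c z2 (3 + d) + c (S (3 + d)) * z2 ^ S (3 + d) - psum c z2 3))%C with
        (((psum c z1 (3 + d) - psum c z1 3) - (psum c z2 (3 + d) - psum c z2 3)) +
          c (S (3 + d)) * (z1 ^ S (3 + d) - z2 ^ S (3 + d)))%C by ring.
      eapply Rle_trans. apply Cmod_triangle. rewrite Cmod_mult.
      pose proof (pow_diff z1 z2 s (3 + d) H1 H2) as Pd. fold dz in Pd.
      specialize (Hc (S (3 + d))).
      assert (Hck : Cmod (c (S (3 + d))) <= M * 2 ^ (S (3 + d))).
      { apply Rmult_le_reg_r with ((1/2) ^ S (3 + d)). apply pow_lt; lra.
        rewrite Rmult_assoc, <- Rpow_mult_distr. replace (2 * (1/2)) with 1 by field.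
        rewrite pow1. lra. }
      assert (Hxd : x ^ (3 + d) <= x ^ 3 * (1/2) ^ d).
      { rewrite pow_add. apply Rmult_le_compat_l. apply pow_le; unfold x; lra.
        apply pow_incr; unfold x; lra. }
      assert (Hterm : Cmod (c (S (3 + d))) * Cmod (z1 ^ S (3 + d) - z2 ^ S (3 + d))%C
         <= 2 * M * (INR d + 4) * x ^ 3 * (1/2) ^ d * dz).
      { eapply Rle_trans. apply Rmult_le_compat. apply Cmod_ge_0. apply Cmod_ge_0. exact Hck. exact Pd.
        replace (M * 2 ^ S (3 + d) * (INR (S (3 + d)) * s ^ (3 + d) * dz)) with
          (2 * M * INR (S (3 + d)) * x ^ (3 + d) * dz) by (unfold x; rewrite Rpow_mult_distr; simpl; ring).
        replace (INR (S (3 + d))) with (INR d + 4) by (rewrite S_INR, plus_INR; simpl; ring).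
        assert (0 <= INR d) by apply pos_INR.
        assert (0 <= 2 * M * (INR d + 4)) by nra.
        replace (2 * M * (INR d + 4) * x ^ 3 * (1 / 2) ^ d * dz) with
          (2 * M * (INR d + 4) * (x ^ 3 * (1 / 2) ^ d) * dz) by ring.
        apply Rmult_le_compat_r; auto. apply Rmult_le_compat_l; auto. }
      eapply Rle_trans. apply Rplus_le_compat. exact IHd. exact Hterm.
      right. rewrite S_INR. simpl. 
      assert (0 < 2 ^ d) by (apply pow_lt; lra).
      assert (E : (1/2)^d = / 2^d) by (apply Rmult_eq_reg_r with (2^d); [rewrite Rinv_l by lra; rewrite <- Rpow_mult_distr; replace (1/2*2) with 1 by field; apply pow1 | lra]).
      rewrite E.
      field. lra. }
  assert (In1 : inU z1) by (unfold inU; change (Cmod z1 < 1); lra).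
  assert (In2 : inU z2) by (unfold inU; change (Cmod z2 < 1); lra).
  replace ((h z1 - psum c z1 3) - (h z2 - psum c z2 3))%C with
    ((h z1 - h z2) - (psum c z1 3 - psum c z2 3))%C by ring.
  apply (lim_le (fun n => psum c z1 n - psum c z2 n)%C).
  - intros eps He. destruct (Hs z1 In1 (eps/2) ltac:(lra)) as [N1 HN1].
    destruct (Hs z2 In2 (eps/2) ltac:(lra)) as [N2 HN2].
    exists (max N1 N2). intros n Hn.
    specialize (HN1 n ltac:(lia)). specialize (HN2 n ltac:(lia)).
    change (Cnorm (Csub ?a ?b)) with (Cmod (a - b)%C) in HN1, HN2.
    replace (psum c z1 n - psum c z2 n - (h z1 - h z2))%C with
      ((psum c z1 n - h z1) - (psum c z2 n - h z2))%C by ring.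
    eapply Rle_lt_trans. apply Cmod_sub_le. lra.
  - intros N. exists (3 + N)%nat. split; [lia|].
    replace (psum c z1 (3 + N) - psum c z2 (3 + N) - (psum c z1 3 - psum c z2 3))%C with
      ((psum c z1 (3 + N) - psum c z1 3) - (psum c z2 (3 + N) - psum c z2 3))%C by ring.
    eapply Rle_trans. apply Hind.
    assert (0 < 2 ^ N) by (apply pow_lt; lra).
    assert (0 <= 2 * (INR N + 5) / 2 ^ N) by (apply Rdiv_le_0_compat; [pose proof (pos_INR N)|]; lra).
    assert (0 <= 2 * M * x ^ 3) by (apply Rmult_le_pos; [lra|apply pow_le; unfold x; lra]).
    replace (160 * M * s ^ 3 * dz) with (2 * M * x ^ 3 * 10 * dz) by (unfold x; ring).
    apply Rmult_le_compat_r; auto. apply Rmult_le_compat_l; auto. lra.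
Qed.

Lemma psum3 c (w : C) : psum c w 3 = (c O + c 1%nat * w + c 2%nat * w ^ 2 + c 3%nat * w ^ 3)%C.
Proof. ceq. Qed.

Lemma deriv_local c h hd M : 0 <= M -> (forall n, Cmod (c n) * (1/2) ^ n <= M) ->
  (forall z, inU z -> ps_sum c z (h z)) ->
  (forall z, inU z -> has_cderiv h z (hd z)) ->
  forall z, Cmod z <= 1/8 ->
  Cmod (hd z - (c 1%nat + RtoC 2 * c 2%nat * z + RtoC 3 * c 3%nat * z ^ 2))%C <= 160 * M * Cmod z ^ 3.
Proof.
  intros HM Hc Hs Hd z Hz.
  assert (Hz0 : 0 <= Cmod z) by apply Cmod_ge_0.
  apply Rle_plus_epsilon. intros e He.
  set (A := 160 * M + Cmod (c 2%nat) + Cmod (c 3%nat) + 1).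
  assert (HA : 1 <= A) by (unfold A; pose proof (Cmod_ge_0 (c 2%nat)); pose proof (Cmod_ge_0 (c 3%nat)); lra).
  assert (Inz : inU z) by (unfold inU; change (Cmod z < 1); lra).
  destruct (Hd z Inz (e/2) ltac:(lra)) as [del [Hdel Hdq]].
  set (kap := Rmin (del/2) (Rmin (1/8) (e / (2 * A)))).
  assert (Hk0 : 0 < kap) by (unfold kap; repeat apply Rmin_pos; try lra; apply Rdiv_lt_0_compat; lra).
  assert (Hk1 : kap <= del/2) by apply Rmin_l.
  assert (Hk2 : kap <= 1/8) by (unfold kap; eapply Rle_trans; [apply Rmin_r|apply Rmin_l]).
  assert (Hk3 : kap <= e / (2 * A)) by (unfold kap; eapply Rle_trans; [apply Rmin_r|apply Rmin_r]).
  set (k := RtoC kap).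
  assert (Hkm : Cmod k = kap) by (unfold k; rewrite Cmod_R; apply Rabs_pos_eq; lra).
  assert (Hkn : k <> RtoC 0) by (intro Hk; apply (f_equal fst) in Hk; simpl in Hk; lra).
  assert (Hkn' : k <> C0) by exact Hkn.
  specialize (Hdq k Hkn' ltac:(change (Cmod k < del); lra)).
  change (Cnorm (Csub (Defs.Cdiv (Csub (h (Cadd z k)) (h z)) k) (hd z))) with
    (Cmod ((h (z + k) - h z) / k - hd z)%C) in Hdq.
  set (s := Cmod z + kap).
  assert (Hzk : Cmod (z + k)%C <= s) by (unfold s; rewrite <- Hkm; apply Cmod_triangle).
  pose proof (tail_lip c h M HM Hc Hs (z + k)%C z s Hzk ltac:(unfold s; lra) ltac:(unfold s; lra)) as TL.
  replace (z + k - z)%C with k in TL by ring. rewrite Hkm in TL.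
  rewrite !psum3 in TL.
  set (T := ((h (z + k) - (c O + c 1%nat * (z + k) + c 2%nat * (z + k) ^ 2 + c 3%nat * (z + k) ^ 3)) -
            (h z - (c O + c 1%nat * z + c 2%nat * z ^ 2 + c 3%nat * z ^ 3)))%C) in TL.
  replace (hd z - (c 1%nat + RtoC 2 * c 2%nat * z + RtoC 3 * c 3%nat * z ^ 2))%C with
    (- ((h (z + k) - h z) / k - hd z) + T / k + c 2%nat * k + c 3%nat * (RtoC 3 * z * k + k ^ 2))%C
    by (unfold T; field; exact Hkn).
  assert (HT : Cmod (T / k)%C <= 160 * M * s ^ 3).
  { rewrite Cmod_div by exact Hkn. rewrite Hkm. apply Rmult_le_reg_r with kap; auto.
    unfold Rdiv. rewrite Rmult_assoc, Rinv_l by lra. lra. }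
  assert (H2 : Cmod (c 2%nat * k)%C <= Cmod (c 2%nat) * kap) by (rewrite Cmod_mult, Hkm; lra).
  assert (H3 : Cmod (c 3%nat * (RtoC 3 * z * k + k ^ 2))%C <= Cmod (c 3%nat) * kap).
  { rewrite Cmod_mult. apply Rmult_le_compat_l. apply Cmod_ge_0.
    eapply Rle_trans. apply Cmod_triangle. rewrite !Cmod_mult, Cmod_pow, Cmod_R, Hkm.
    rewrite Rabs_pos_eq by lra. nra. }
  assert (Hs3 : s ^ 3 <= Cmod z ^ 3 + kap).
  { unfold s. assert (Q : 3 * Cmod z ^ 2 + 3 * Cmod z * kap + kap ^2 <= 1) by nra.
    assert (kap * (3 * Cmod z ^ 2 + 3 * Cmod z * kap + kap ^2) <= kap * 1) by (apply Rmult_le_compat_l; lra).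
    replace ((Cmod z + kap) ^ 3) with (Cmod z ^ 3 + kap * (3 * Cmod z ^ 2 + 3 * Cmod z * kap + kap ^2)) by ring.
    lra. }
  assert (Hsum : 160 * M * s ^ 3 + Cmod (c 2%nat) * kap + Cmod (c 3%nat) * kap <= 160 * M * Cmod z ^ 3 + e / 2).
  { assert (160 * M * s^3 <= 160 * M * (Cmod z ^ 3 + kap)) by (apply Rmult_le_compat_l; lra).
    assert (A * kap <= e / 2).
    { apply Rmult_le_reg_r with (/ A). apply Rinv_0_lt_compat; lra.
      rewrite Rmult_comm, <- Rmult_assoc, Rinv_l by lra. 
      replace (e / 2 * / A) with (e / (2 * A)) by (field; lra). lra. }
    unfold A in *. nra. }
  eapply Rle_trans. apply Cmod_triangle.
  eapply Rle_trans. apply Rplus_le_compat_r. apply Cmod_triangle.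
  eapply Rle_trans. apply Rplus_le_compat_r. apply Rplus_le_compat_r. apply Cmod_triangle.
  rewrite Cmod_opp. lra.
Qed.

Definition Ob (n : nat) (F : R -> C) : Prop :=
  exists K rho, 0 < rho /\ forall t, 0 < t <= rho -> Cmod (F t) <= K * t ^ n.

Lemma Ob_Kpos n F : Ob n F -> exists K rho, 0 <= K /\ 0 < rho /\ forall t, 0 < t <= rho -> Cmod (F t) <= K * t ^ n.
Proof.
  intros [K [rho [Hr H]]]. exists (Rmax K 0), rho. split; [apply Rmax_r|split; auto].
  intros t Ht. eapply Rle_trans. apply H; auto. apply Rmult_le_compat_r.
  apply pow_le; lra. apply Rmax_l.
Qed.

Lemma Ob_ext n F G : Ob n F -> (exists r0, 0 < r0 /\ forall t, 0 < t <= r0 -> F t = G t) -> Ob n G.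
Proof.
  intros [K [rho [Hr H]]] [r0 [H0 HE]]. exists K, (Rmin rho r0). split.
  apply Rmin_pos; auto. intros t Ht.
  pose proof (Rmin_l rho r0); pose proof (Rmin_r rho r0).
  rewrite <- HE by lra. apply H; lra.
Qed.

Lemma Ob_add n F G : Ob n F -> Ob n G -> Ob n (fun t => F t + G t)%C.
Proof.
  intros [K1 [r1 [H1 B1]]] [K2 [r2 [H2 B2]]]. exists (K1 + K2), (Rmin r1 r2). split.
  apply Rmin_pos; auto. intros t Ht.
  pose proof (Rmin_l r1 r2); pose proof (Rmin_r r1 r2).
  eapply Rle_trans. apply Cmod_triangle. specialize (B1 t ltac:(lra)). specialize (B2 t ltac:(lra)). lra.
Qed.

Lemma Ob_opp n F : Ob n F -> Ob n (fun t => - F t)%C.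
Proof. intros [K [r [H B]]]. exists K, r. split; auto. intros t Ht. rewrite Cmod_opp. auto. Qed.

Lemma Ob_sub n F G : Ob n F -> Ob n G -> Ob n (fun t => F t - G t)%C.
Proof. intros. apply Ob_add; auto. apply Ob_opp; auto. Qed.

Lemma Ob_mul m n F G : Ob m F -> Ob n G -> Ob (m + n) (fun t => F t * G t)%C.
Proof.
  intros HF HG. apply Ob_Kpos in HF as [K1 [r1 [K1p [H1 B1]]]]. apply Ob_Kpos in HG as [K2 [r2 [K2p [H2 B2]]]].
  exists (K1 * K2), (Rmin r1 r2). split.
  apply Rmin_pos; auto. intros t Ht.
  pose proof (Rmin_l r1 r2); pose proof (Rmin_r r1 r2).
  rewrite Cmod_mult, pow_add. specialize (B1 t ltac:(lra)). specialize (B2 t ltac:(lra)).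
  replace (K1 * K2 * (t ^ m * t ^ n)) with ((K1 * t ^ m) * (K2 * t ^ n)) by ring.
  apply Rmult_le_compat; auto; apply Cmod_ge_0.
Qed.

Lemma Ob_const c : Ob 0 (fun _ => c).
Proof. exists (Cmod c), 1. split; [lra|]. intros. simpl. lra. Qed.

Lemma Cmod_t t : 0 <= t -> Cmod (RtoC t) = t.
Proof. intros. rewrite Cmod_R. apply Rabs_pos_eq; auto. Qed.

Lemma Ob_t n : Ob n (fun t => RtoC t ^ n)%C.
Proof. exists 1, 1. split; [lra|]. intros t Ht. rewrite Cmod_pow, Cmod_t by lra. lra. Qed.

Lemma pow_le_dec t m n : 0 <= t <= 1 -> (m <= n)%nat -> t^n <= t^m.
Proof. intros Ht. induction 1; [lra|]. simpl. assert (0 <= t^m0) by (apply pow_le; lra). nra. Qed.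

Lemma Ob_le m n F : (m <= n)%nat -> Ob n F -> Ob m F.
Proof.
  intros Hmn [K [r [H B]]]. exists K, (Rmin r 1). split. apply Rmin_pos; lra.
  intros t Ht. pose proof (Rmin_l r 1); pose proof (Rmin_r r 1).
  specialize (B t ltac:(lra)). eapply Rle_trans. apply B.
  destruct (Rle_dec 0 K).
  - apply Rmult_le_compat_l; auto. apply pow_le_dec; auto; lra.
  - assert (0 <= K * t^n) by (pose proof (Cmod_ge_0 (F t)); lra).
    assert (0 < t^n) by (apply pow_lt; lra). nra.
Qed.

Lemma Ob_divt n F : Ob (S n) F -> Ob n (fun t => F t / RtoC t)%C.
Proof.
  intros [K [r [H B]]]. exists K, r. split; auto. intros t Ht.
  rewrite Cmod_div. 2:{ intro E. apply (f_equal fst) in E. simpl in E. lra. }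
  rewrite Cmod_t by lra. apply Rmult_le_reg_r with t. lra.
  unfold Rdiv. rewrite Rmult_assoc, Rinv_l by lra. specialize (B t Ht). simpl in B. lra.
Qed.

Lemma Ob_coef n c : Ob (S n) (fun t => c * RtoC t ^ n)%C -> c = RtoC 0.
Proof.
  intros HF. apply Ob_Kpos in HF as [K [r [HK [Hr B]]]].
  apply Cmod_eq_0. destruct (Req_dec (Cmod c) 0) as [E|E]; auto. exfalso.
  pose proof (Cmod_ge_0 c).
  set (t := Rmin r (Cmod c / (2 * (K + 1)))).
  assert (Ht : 0 < t) by (unfold t; apply Rmin_pos; auto; apply Rdiv_lt_0_compat; lra).
  assert (Ht1 : t <= r) by apply Rmin_l.
  assert (Ht2 : t <= Cmod c / (2 * (K + 1))) by apply Rmin_r.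
  specialize (B t ltac:(lra)). rewrite Cmod_mult, Cmod_pow, Cmod_t in B by lra.
  assert (0 < t ^ n) by (apply pow_lt; lra). simpl in B.
  assert (Cmod c <= K * t) by (apply Rmult_le_reg_r with (t ^ n); auto; nra).
  assert (t * (2 * (K + 1)) <= Cmod c).
  { apply Rmult_le_reg_r with (/ (2 * (K + 1))). apply Rinv_0_lt_compat; lra.
    rewrite Rmult_assoc, Rinv_r by lra. lra. }
  nra.
Qed.

Lemma Ob_nz F : Ob 1 (fun t => F t - 1)%C -> exists r0, 0 < r0 /\ forall t, 0 < t <= r0 -> Cmod (F t) >= 1/2.
Proof.
  intros HF. apply Ob_Kpos in HF as [K [r [HK [Hr B]]]].
  exists (Rmin r (1 / (2 * (K + 1)))). split. apply Rmin_pos; auto. apply Rdiv_lt_0_compat; lra.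
  intros t Ht. pose proof (Rmin_l r (1 / (2 * (K + 1)))); pose proof (Rmin_r r (1 / (2 * (K + 1)))).
  specialize (B t ltac:(lra)). simpl in B.
  assert (t * (2 * (K + 1)) <= 1).
  { apply Rmult_le_reg_r with (/ (2 * (K + 1))). apply Rinv_0_lt_compat; lra.
    rewrite Rmult_assoc, Rinv_r by lra. lra. }
  assert (Cmod (F t - 1)%C <= 1/2) as Hc by nra.
  pose proof (Cmod_triangle (F t) (- (F t - 1))%C) as T.
  replace (F t + - (F t - 1))%C with (RtoC 1) in T by ring.
  rewrite Cmod_opp, Cmod_1 in T. lra.
Qed.

Lemma Ob_inv F : Ob 1 (fun t => F t - 1)%C -> Ob 0 (fun t => / F t)%C.
Proof.
  intros HF. destruct (Ob_nz F HF) as [r0 [Hr B]]. exists 2, r0. split; auto.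
  intros t Ht. specialize (B t Ht). rewrite Cmod_inv.
  2:{ intro E. rewrite E, Cmod_0 in B. lra. }
  simpl. rewrite Rmult_1_r. apply Rmult_le_reg_r with (Cmod (F t)). lra.
  rewrite Rinv_l by lra. lra.
Qed.

Lemma Ob_comp n (G : C -> C) (u : R -> C) rho1 K :
  0 < rho1 -> (forall z, Cmod z <= rho1 -> Cmod (G z) <= K * Cmod z ^ n) ->
  Ob 1 u -> Ob n (fun t => G (u t)).
Proof.
  intros Hr1 HG Hu. apply Ob_Kpos in Hu as [K1 [r [HK1 [Hr B]]]].
  exists (Rmax K 0 * K1 ^ n), (Rmin r (rho1 / (K1 + 1))). split.
  apply Rmin_pos; auto. apply Rdiv_lt_0_compat; lra.
  intros t Ht. pose proof (Rmin_l r (rho1 / (K1 + 1))); pose proof (Rmin_r r (rho1 / (K1 + 1))).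
  specialize (B t ltac:(lra)). simpl in B. rewrite Rmult_1_r in B.
  assert (t * (K1 + 1) <= rho1).
  { apply Rmult_le_reg_r with (/ (K1 + 1)). apply Rinv_0_lt_compat; lra.
    rewrite Rmult_assoc, Rinv_r by lra. lra. }
  assert (Hu : Cmod (u t) <= rho1) by nra.
  eapply Rle_trans. apply HG; auto.
  eapply Rle_trans. apply Rmult_le_compat_r. apply pow_le, Cmod_ge_0. apply Rmax_l.
  rewrite Rmult_assoc, <- Rpow_mult_distr. apply Rmult_le_compat_l. apply Rmax_r.
  apply pow_incr. split; auto. apply Cmod_ge_0.
Qed.

Lemma Ob_of_bound n (G : C -> C) rho1 K : 0 < rho1 ->
  (forall z, Cmod z <= rho1 -> Cmod (G z) <= K * Cmod z ^ n) -> Ob n (fun t => G (RtoC t)).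
Proof.
  intros H1 H2. apply (Ob_comp n G (fun t => RtoC t) rho1 K H1 H2).
  exists 1, 1. split; [lra|]. intros t Ht. rewrite Cmod_t by lra. lra.
Qed.

Ltac toC := match goal with |- @eq _ ?a ?b => change (@eq C a b) end.

Lemma Ob_eq n F G : Ob n F -> (forall t, 0 < t -> F t = G t) -> Ob n G.
Proof. intros H E. apply (Ob_ext n F G H). exists 1. split; [lra|]. intros; apply E; lra. Qed.

Lemma Ob_tk k n (a : C) : (n <= k)%nat -> Ob n (fun t => a * RtoC t ^ k)%C.
Proof.
  intros H. apply (Ob_le n k); auto. replace k with (0 + k)%nat by lia.
  apply Ob_mul. apply Ob_const. apply Ob_t.
Qed.

Lemma coef2 e1 e2 : Ob 3 (fun t => e1 * RtoC t + e2 * RtoC t ^ 2)%C -> e1 = RtoC 0 /\ e2 = RtoC 0.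
Proof.
  intros H.
  assert (H1 : Ob 2 (fun t => e1 * RtoC t ^ 1)%C).
  { apply (Ob_eq 2 (fun t => (e1 * RtoC t + e2 * RtoC t ^ 2) - e2 * RtoC t ^ 2)%C).
    apply Ob_sub. apply (Ob_le 2 3); auto. apply Ob_tk; auto. intros; ring. }
  apply (Ob_coef 1 e1) in H1. split; auto.
  apply (Ob_coef 2). apply (Ob_eq 3 (fun t => (e1 * RtoC t + e2 * RtoC t ^ 2))%C); auto.
  intros. rewrite H1. ring.
Qed.

Lemma coef3 e1 e2 e3 : Ob 4 (fun t => e1 * RtoC t + e2 * RtoC t ^ 2 + e3 * RtoC t ^ 3)%C ->
  e1 = RtoC 0 /\ e2 = RtoC 0 /\ e3 = RtoC 0.
Proof.
  intros H.
  assert (H1 : Ob 3 (fun t => e1 * RtoC t + e2 * RtoC t ^ 2)%C).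
  { apply (Ob_eq 3 (fun t => (e1 * RtoC t + e2 * RtoC t ^ 2 + e3 * RtoC t ^ 3) - e3 * RtoC t ^ 3)%C).
    apply Ob_sub. apply (Ob_le 3 4); auto. apply Ob_tk; auto. intros; ring. }
  apply coef2 in H1 as [E1 E2]. split; auto. split; auto.
  apply (Ob_coef 3). apply (Ob_eq 4 (fun t => (e1 * RtoC t + e2 * RtoC t ^ 2 + e3 * RtoC t ^ 3))%C); auto.
  intros. rewrite E1, E2. ring.
Qed.

Lemma inU_small (z : C) : Cmod z <= 1/4 -> inU z.
Proof. intros; unfold inU; change (Cmod z < 1); lra. Qed.

Lemma RtoC_nz t : 0 < t -> RtoC t <> RtoC 0.
Proof. intros H E. apply (f_equal fst) in E. simpl in E. lra. Qed.

Lemma sq_expand c h hd : c O = RtoC 0 -> c 1%nat = RtoC 1 ->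
  (forall z, inU z -> ps_sum c z (h z)) -> (forall z, inU z -> has_cderiv h z (hd z)) ->
  Ob 3 (fun t => starlike_quot h hd (RtoC t) -
     (1 + c 2%nat * RtoC t + (RtoC 2 * c 3%nat - c 2%nat ^ 2) * RtoC t ^ 2))%C.
Proof.
  intros H0 H1 Hs Hd.
  destruct (coef_bound c h (1/2) ltac:(lra) Hs) as [M [HM Hc]].
  assert (E4 : Ob 4 (fun t => h (RtoC t) - psum c (RtoC t) 3)%C).
  { apply (Ob_of_bound 4 (fun z => h z - psum c z 3)%C (1/4) (M * 2 ^ (3 + 2))); [lra|].
    intros z Hz. apply ps_local; auto. }
  assert (D3 : Ob 3 (fun t => hd (RtoC t) - (c 1%nat + RtoC 2 * c 2%nat * RtoC t + RtoC 3 * c 3%nat * RtoC t ^ 2))%C).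
  { apply (Ob_of_bound 3 (fun z => hd z - (c 1%nat + RtoC 2 * c 2%nat * z + RtoC 3 * c 3%nat * z ^ 2))%C (1/8) (160 * M)); [lra|].
    intros z Hz. apply deriv_local with h; auto. }
  set (E := fun t => ((h (RtoC t) - psum c (RtoC t) 3) / RtoC t)%C).
  assert (E3 : Ob 3 E) by (apply Ob_divt; exact E4).
  set (Dn := fun t => (1 + c 2%nat * RtoC t + c 3%nat * RtoC t ^ 2 + E t)%C).
  assert (HDn1 : Ob 1 (fun t => Dn t - 1)%C).
  { apply (Ob_eq 1 (fun t => c 2%nat * RtoC t ^ 1 + c 3%nat * RtoC t ^ 2 + E t)%C).
    apply Ob_add. apply Ob_add. apply Ob_tk; auto. apply Ob_tk; auto. apply (Ob_le 1 3); auto.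
    intros; unfold Dn; ring. }
  assert (HDi : Ob 0 (fun t => / Dn t)%C) by (apply Ob_inv; exact HDn1).
  destruct (Ob_nz Dn HDn1) as [r0 [Hr0 HDnz]].
  set (S := fun t => (1 + c 2%nat * RtoC t + (RtoC 2 * c 3%nat - c 2%nat ^ 2) * RtoC t ^ 2)%C).
  assert (HS : Ob 0 S).
  { unfold S. apply Ob_add. apply Ob_add. apply Ob_const. apply (Ob_eq 0 (fun t => c 2%nat * RtoC t ^ 1)%C). apply Ob_tk; auto. intros; ring.
    apply (Ob_tk 2 0); auto. }
  assert (X3 : Ob 3 (fun t => hd (RtoC t) - S t * Dn t)%C).
  { apply (Ob_eq 3 (fun t =>
       (hd (RtoC t) - (c 1%nat + RtoC 2 * c 2%nat * RtoC t + RtoC 3 * c 3%nat * RtoC t ^ 2))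
       - (c 2%nat * (RtoC 2 * c 3%nat - c 2%nat ^ 2) + c 2%nat * c 3%nat) * RtoC t ^ 3
       - c 3%nat * (RtoC 2 * c 3%nat - c 2%nat ^ 2) * RtoC t ^ 4
       - S t * E t)%C).
    - apply Ob_sub. apply Ob_sub. apply Ob_sub. exact D3.
      apply Ob_tk; auto. apply Ob_tk; auto.
      replace 3%nat with (0 + 3)%nat by reflexivity. apply Ob_mul; auto.
    - intros t Ht. unfold S, Dn. rewrite H1. ring. }
  apply (Ob_ext 3 (fun t => (hd (RtoC t) - S t * Dn t) * / Dn t)%C).
  { replace 3%nat with (3 + 0)%nat by reflexivity. apply Ob_mul; auto. }
  exists r0. split; auto. intros t Ht.
  assert (Dnz : Dn t <> RtoC 0).
  { intro Z. specialize (HDnz t Ht). rewrite Z, Cmod_0 in HDnz. lra. }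
  assert (tnz : RtoC t <> RtoC 0) by (apply RtoC_nz; lra).
  assert (Hh : h (RtoC t) = (RtoC t * Dn t)%C).
  { unfold Dn, E. rewrite psum3, H0, H1. toC. symmetry. field. exact tnz. }
  assert (Qe : starlike_quot h hd (RtoC t) = (RtoC t * hd (RtoC t) / h (RtoC t))%C).
  { unfold starlike_quot. simpl fst. destruct (Req_EM_T t 0). lra. reflexivity. }
  rewrite Qe, Hh. fold (S t). toC. field. split; auto.
Qed.

Lemma ptarget_eq beta (z : C) : ptarget beta z = (RtoC 1 + (RtoC (2 * beta) * z + RtoC (2 * beta ^ 2) * (z * z)))%C.
Proof. reflexivity. Qed.

Lemma sub_expand beta (u : C -> C) d : 0 < beta <= 1 ->
  (forall z, inU z -> ps_sum d z (u z)) -> u C0 = C0 ->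
  Ob 3 (fun t => strong_fun beta (u (RtoC t)) -
    (1 + RtoC (2 * beta) * d 1%nat * RtoC t
       + (RtoC (2 * beta) * d 2%nat + RtoC (2 * beta ^ 2) * d 1%nat ^ 2) * RtoC t ^ 2))%C.
Proof.
  intros Hb Hs Hu0.
  assert (Hd0 : d O = RtoC 0).
  { assert (E : u (RtoC 0) = d O).
    { apply (ps_sum_0 d (u (RtoC 0))). apply Hs. unfold inU. change (Cmod (RtoC 0) < 1). rewrite Cmod_0. lra. }
    rewrite <- E. exact Hu0. }
  destruct (coef_bound d u (1/2) ltac:(lra) Hs) as [M [HM Hc]].
  assert (U3 : Ob 3 (fun t => u (RtoC t) - psum d (RtoC t) 2)%C).
  { apply (Ob_of_bound 3 (fun z => u z - psum d z 2)%C (1/4) (M * 2 ^ (2 + 2))); [lra|].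
    intros z Hz. apply ps_local; auto. }
  assert (ps2 : forall t, psum d (RtoC t) 2 = (d 1%nat * RtoC t + d 2%nat * RtoC t ^ 2)%C).
  { intros t. apply injective_projections; simpl; rewrite Hd0; simpl; ring. }
  assert (V2 : Ob 2 (fun t => u (RtoC t) - d 1%nat * RtoC t)%C).
  { apply (Ob_eq 2 (fun t => (u (RtoC t) - psum d (RtoC t) 2) + d 2%nat * RtoC t ^ 2)%C).
    apply Ob_add. apply (Ob_le 2 3); auto. apply Ob_tk; auto.
    intros t _. rewrite ps2. ring. }
  assert (V1 : Ob 1 (fun t => u (RtoC t))).
  { apply (Ob_eq 1 (fun t => (u (RtoC t) - d 1%nat * RtoC t) + d 1%nat * RtoC t ^ 1)%C).
    apply Ob_add. apply (Ob_le 1 2); auto. apply Ob_tk; auto. intros; ring. }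
  assert (W1 : Ob 1 (fun t => u (RtoC t) + d 1%nat * RtoC t)%C).
  { apply (Ob_eq 1 (fun t => u (RtoC t) + d 1%nat * RtoC t ^ 1)%C).
    apply Ob_add; auto. apply Ob_tk; auto. intros; ring. }
  assert (P3 : Ob 3 (fun t => strong_fun beta (u (RtoC t)) - ptarget beta (u (RtoC t)))%C).
  { apply (Ob_comp 3 (fun z => strong_fun beta z - ptarget beta z)%C (fun t => u (RtoC t)) (1/8) 500); auto; [lra|].
    intros z Hz. apply p_expand; auto. }
  apply (Ob_eq 3 (fun t => (strong_fun beta (u (RtoC t)) - ptarget beta (u (RtoC t)))
      + RtoC (2 * beta) * (u (RtoC t) - psum d (RtoC t) 2)
      + RtoC (2 * beta ^ 2) * ((u (RtoC t) - d 1%nat * RtoC t) * (u (RtoC t) + d 1%nat * RtoC t)))%C).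
  - apply Ob_add. apply Ob_add. auto.
    replace 3%nat with (0 + 3)%nat by reflexivity. apply Ob_mul; auto. apply Ob_const.
    replace 3%nat with (0 + (2 + 1))%nat by reflexivity. apply Ob_mul. apply Ob_const. apply Ob_mul; auto.
  - intros t _. rewrite ps2, ptarget_eq. ring.
Qed.

Fixpoint csum (f : nat -> C) (n : nat) : C :=
  match n with O => RtoC 0 | S m => (csum f m + f m)%C end.

Lemma csum_ext f g n : (forall k, (k < n)%nat -> f k = g k) -> csum f n = csum g n.
Proof. induction n; intros H; simpl; auto. rewrite IHn, H; auto. Qed.

Lemma csum_add f g n : csum (fun k => f k + g k)%C n = (csum f n + csum g n)%C.
Proof. induction n; simpl. ring. rewrite IHn. ring. Qed.

Lemma csum_sub f g n : (csum f n - csum g n)%C = csum (fun k => f k - g k)%C n.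
Proof. induction n; simpl. ring. rewrite <- IHn. ring. Qed.

Lemma csum_scal a f n : (a * csum f n)%C = csum (fun k => a * f k)%C n.
Proof. induction n; simpl. ring. rewrite <- IHn. ring. Qed.

Lemma csum_swap (F : nat -> nat -> C) n m :
  csum (fun k => csum (fun j => F k j) m) n = csum (fun j => csum (fun k => F k j) n) m.
Proof.
  induction n; simpl.
  - induction m; simpl; auto. rewrite <- IHm. ring.
  - rewrite IHn. rewrite <- csum_add. reflexivity.
Qed.

Lemma Cmod_csum_le f n B : (forall k, (k < n)%nat -> Cmod (f k) <= B) -> Cmod (csum f n) <= INR n * B.
Proof.
  induction n; intros H; cbn [csum]. rewrite Cmod_0. simpl. lra.
  eapply Rle_trans. apply Cmod_triangle. rewrite S_INR.
  assert (Cmod (csum f n) <= INR n * B) by (apply IHn; intros; apply H; lia).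
  specialize (H n ltac:(lia)). lra.
Qed.

Lemma csum_const a n : csum (fun _ => a) n = (INR n * a)%C.
Proof. induction n; simpl csum. simpl. ring. rewrite IHn, S_INR. rewrite RtoC_plus. ring. Qed.

Lemma psum_csum c z m : psum c z m = csum (fun n => c n * z ^ n)%C (S m).
Proof.
  induction m. simpl. change (c O * 1 = RtoC 0 + c O * 1)%C. ring.
  rewrite psum_S, IHm. reflexivity.
Qed.

Lemma geom_sum (w : C) n : ((1 - w) * csum (fun k => w ^ k) n = 1 - w ^ n)%C.
Proof. induction n; simpl csum. simpl. ring. rewrite Cmult_plus_distr_l, IHn. simpl. ring. Qed.

Lemma geom_zero (w : C) n : w <> RtoC 1 -> (w ^ n = 1)%C -> csum (fun k => w ^ k)%C n = RtoC 0.
Proof.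
  intros H1 H2. pose proof (geom_sum w n) as G. rewrite H2 in G.
  assert (Hw : (1 - w)%C <> RtoC 0).
  { intro E. apply H1. replace w with (1 - (1 - w))%C by ring. rewrite E. ring. }
  replace (csum (fun k => (w ^ k)%C) n) with (/ (1 - w) * ((1 - w) * csum (fun k => (w ^ k)%C) n))%C
    by (field; auto).
  rewrite G. ring.
Qed.

Definition om (N : nat) : C := (cos (2 * PI / INR N), sin (2 * PI / INR N)).

Lemma om_pow N k : (om N ^ k)%C = (cos (INR k * (2 * PI / INR N)), sin (INR k * (2 * PI / INR N))).
Proof.
  induction k.
  - simpl. rewrite Rmult_0_l, cos_0, sin_0. reflexivity.
  - rewrite Cpow_S, IHk. unfold om. rewrite S_INR.
    set (th := 2 * PI / INR N).
    replace ((INR k + 1) * th) with (th + INR k * th) by ring.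
    rewrite cos_plus, sin_plus. apply injective_projections; simpl; ring.
Qed.

Lemma om_mod N : Cmod (om N) = 1.
Proof.
  unfold om, Cmod. simpl. rewrite Rplus_comm. 
  replace (sin (2 * PI / INR N) * (sin (2 * PI / INR N) * 1) + cos (2 * PI / INR N) * (cos (2 * PI / INR N) * 1))
    with ((sin (2 * PI / INR N))² + (cos (2 * PI / INR N))²) by (unfold Rsqr; ring).
  rewrite sin2_cos2. apply sqrt_1.
Qed.

Lemma om_N N : (0 < N)%nat -> (om N ^ N = 1)%C.
Proof.
  intros H. rewrite om_pow.
  replace (INR N * (2 * PI / INR N)) with (2 * PI) by (field; apply not_0_INR; lia).
  rewrite cos_2PI, sin_2PI. reflexivity.
Qed.

Lemma om_ne1 N j : (0 < j < N)%nat -> (om N ^ j)%C <> RtoC 1.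
Proof.
  intros H E. rewrite om_pow in E. apply (f_equal fst) in E. simpl in E.
  set (th := INR j * (2 * PI / INR N)) in E.
  assert (Hth : 0 < th / 2 < PI).
  { unfold th. assert (0 < INR j) by (apply lt_0_INR; lia).
    assert (INR j < INR N) by (apply lt_INR; lia).
    assert (0 < INR N) by lra. pose proof PI_RGT_0. split.
    - apply Rdiv_lt_0_compat; [|lra]. apply Rmult_lt_0_compat; auto. apply Rdiv_lt_0_compat; lra.
    - replace (INR j * (2 * PI / INR N) / 2) with (PI * (INR j / INR N)) by (field; lra).
      rewrite <- (Rmult_1_r PI) at 2. apply Rmult_lt_compat_l; auto.
      apply Rmult_lt_reg_r with (INR N); auto. unfold Rdiv. rewrite Rmult_assoc, Rinv_l; lra. }
  pose proof (sin_gt_0 (th/2) ltac:(lra) ltac:(lra)).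
  replace th with (2 * (th / 2)) in E by field. rewrite cos_2a_sin in E. nra.
Qed.

Lemma csum_scal_r a f n : (csum f n * a)%C = csum (fun k => f k * a)%C n.
Proof. induction n; simpl. ring. rewrite <- IHn. ring. Qed.

Definition Sj N j := csum (fun k => ((om N ^ j) ^ k)%C) N.

Lemma Sj_bound N j : Cmod (Sj N j) <= INR N.
Proof.
  unfold Sj. rewrite <- (Rmult_1_r (INR N)). apply Cmod_csum_le.
  intros k _. rewrite !Cmod_pow, om_mod, !pow1. lra.
Qed.

Lemma Sj_N N : (0 < N)%nat -> Sj N N = RtoC (INR N).
Proof.
  intros H. unfold Sj. rewrite om_N by auto.
  rewrite (csum_ext _ (fun _ => RtoC 1)). rewrite csum_const. ring.
  intros. apply Cpow_1_l.
Qed.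

Lemma Sj_zero N j : (0 < j mod N)%nat -> Sj N j = RtoC 0.
Proof.
  intros H. destruct N as [|N']. reflexivity.
  assert (HN : (0 < S N')%nat) by lia. set (N := S N') in *.
  unfold Sj. apply geom_zero.
  - rewrite (Nat.div_mod j N) by lia. rewrite Cpow_add_r, Cpow_mult_r, om_N by auto.
    rewrite Cpow_1_l, Cmult_1_l. apply om_ne1. split; auto. apply Nat.mod_upper_bound; lia.
  - rewrite <- Cpow_mult_r, Nat.mul_comm, Cpow_mult_r, om_N by auto. apply Cpow_1_l.
Qed.

Lemma uniform_conv (F : nat -> nat -> C) (L : nat -> C) K :
  (forall k, (k < K)%nat -> forall eps, 0 < eps -> exists m0, forall m, (m0 <= m)%nat -> Cmod (F k m - L k)%C < eps) ->
  forall eps, 0 < eps -> exists m0, forall m, (m0 <= m)%nat -> forall k, (k < K)%nat -> Cmod (F k m - L k)%C < eps.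
Proof.
  induction K; intros H eps He.
  - exists O. intros; exfalso; lia.
  - destruct (IHK ltac:(intros k0 Hk0; apply H; lia) eps He) as [m1 Hm1].
    destruct (H K ltac:(lia) eps He) as [m2 Hm2].
    exists (max m1 m2). intros m Hm k Hk.
    destruct (Nat.eq_dec k K). subst; apply Hm2; lia. apply Hm1; lia.
Qed.

Lemma cauchy_step (u : C -> C) d r N M :
  (forall z, inU z -> ps_sum d z (u z)) -> (forall z, inU z -> inU (u z)) ->
  0 < r < 1 -> (3 <= N)%nat -> 0 <= M -> (forall n, Cmod (d n) * ((1 + r)/2) ^ n <= M) ->
  Cmod (d 2%nat) * r ^ 2 <= 1 + M * (r / ((1 + r)/2)) ^ (N + 2) / (1 - r / ((1 + r)/2)).
Proof.
  intros Hs Hu Hr HN HM Hc.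
  set (R0 := (1 + r)/2). set (q := r / R0).
  assert (HR0 : r < R0 < 1) by (unfold R0; lra).
  assert (Hq0 : 0 < q) by (unfold q; apply Rdiv_lt_0_compat; lra).
  assert (Hq1 : q < 1) by (unfold q; apply Rmult_lt_reg_r with R0; [lra|]; unfold Rdiv; rewrite Rmult_assoc, Rinv_l; lra).
  set (z := fun k => (RtoC r * om N ^ k)%C).
  assert (Hz : forall k, Cmod (z k) = r) by (intros; unfold z; rewrite Cmod_mult, Cmod_pow, om_mod, pow1, Cmod_t; lra).
  assert (Hzin : forall k, inU (z k)) by (intros; unfold inU; change (Cmod (z k) < 1); rewrite Hz; lra).
  set (wg := fun k => ((om N ^ (N - 2)) ^ k)%C).
  assert (Hwg : forall k, Cmod (wg k) = 1) by (intros; unfold wg; rewrite !Cmod_pow, om_mod, !pow1; auto).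
  set (a := fun n => (d n * RtoC r ^ n * Sj N (n + (N - 2)))%C).
  assert (SI : forall m, csum (fun k => psum d (z k) m * wg k)%C N = csum a (S m)).
  { intros m. rewrite (csum_ext _ (fun k => csum (fun n => d n * z k ^ n * wg k)%C (S m))).
    2:{ intros k _. rewrite psum_csum, csum_scal_r. reflexivity. }
    rewrite csum_swap. apply csum_ext. intros n _. unfold a, Sj.
    rewrite csum_scal. apply csum_ext. intros k _. unfold z, wg.
    assert (E1 : ((om N ^ k) ^ n)%C = ((om N ^ n) ^ k)%C).
    { rewrite <- !Cpow_mult_r. rewrite Nat.mul_comm. reflexivity. }
    assert (E2 : ((om N ^ (n + (N - 2))) ^ k)%C = ((om N ^ n) ^ k * (om N ^ (N - 2)) ^ k)%C).
    { rewrite Cpow_add_r, Cpow_mult_l. reflexivity. }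
    rewrite E2, Cpow_mult_l, E1. ring. }
  assert (Ha : forall n, (n <= N + 1)%nat -> a n = if Nat.eqb n 2 then (RtoC (INR N) * d 2%nat * RtoC r ^ 2)%C else RtoC 0).
  { intros n Hn. unfold a. destruct (Nat.eqb_spec n 2).
    - subst. replace (2 + (N - 2))%nat with N by lia. rewrite Sj_N by lia. ring.
    - rewrite Sj_zero. ring.
      destruct (Compare_dec.le_lt_dec n 1).
      + rewrite Nat.mod_small by lia. lia.
      + replace (n + (N - 2))%nat with ((n - 2) + 1 * N)%nat by lia.
        rewrite Nat.Div0.mod_add. rewrite Nat.mod_small by lia. lia. }
  assert (Hlow : csum a (N + 2) = (RtoC (INR N) * d 2%nat * RtoC r ^ 2)%C).
  { assert (G : forall n', (n' <= N + 2)%nat -> csum a n' = if Nat.leb 3 n' then (RtoC (INR N) * d 2%nat * RtoC r ^ 2)%C else RtoC 0).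
    { induction n'; intros Hn'. reflexivity.
      simpl csum. rewrite IHn' by lia. rewrite Ha by lia.
      destruct n' as [|[|[|n'']]]; simpl; ring. }
    rewrite G by lia. replace (Nat.leb 3 (N + 2)) with true. reflexivity. symmetry; apply Nat.leb_le; lia. }
  assert (HNp : 0 < INR N) by (apply lt_0_INR; lia).
  assert (Hta : forall n, Cmod (a n) <= INR N * M * q ^ n).
  { intros n. unfold a. rewrite !Cmod_mult, Cmod_pow, Cmod_t by lra.
    pose proof (Sj_bound N (n + (N - 2))). specialize (Hc n).
    assert (Cmod (d n) * r ^ n <= M * q ^ n).
    { replace r with (q * R0) by (unfold q; field; lra). rewrite Rpow_mult_distr.
      assert (0 <= q ^ n) by (apply pow_le; lra).
      replace (Cmod (d n) * (q ^ n * R0 ^ n)) with (q ^ n * (Cmod (d n) * R0 ^ n)) by ring.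
      rewrite (Rmult_comm M). apply Rmult_le_compat_l; auto. }
    assert (0 <= Cmod (d n) * r ^ n) by (apply Rmult_le_pos; [apply Cmod_ge_0|apply pow_le; lra]).
    replace (INR N * M * q ^ n) with ((M * q ^ n) * INR N) by ring.
    apply Rmult_le_compat; auto. apply Cmod_ge_0. }
  assert (Htail : forall e, Cmod (csum a (N + 2 + e) - csum a (N + 2))%C <= INR N * M * q ^ (N + 2) * (1 - q ^ e) / (1 - q)).
  { induction e.
    - rewrite Nat.add_0_r. replace (csum a (N + 2) - csum a (N + 2))%C with (RtoC 0) by ring.
      rewrite Cmod_0. simpl. unfold Rdiv. replace (1 - 1) with 0 by ring. lra.
    - rewrite Nat.add_succ_r. simpl csum.
      replace (csum a (N + 2 + e) + a (N + 2 + e)%nat - csum a (N + 2))%C with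
        ((csum a (N + 2 + e) - csum a (N + 2)) + a (N + 2 + e)%nat)%C by ring.
      eapply Rle_trans. apply Cmod_triangle. eapply Rle_trans. apply Rplus_le_compat. exact IHe. apply Hta.
      right. rewrite (pow_add q (N + 2) e). replace (q ^ S e) with (q * q ^ e) by reflexivity. field. lra. }
  set (W := csum (fun k => u (z k) * wg k)%C N).
  assert (HW : Cmod W <= INR N).
  { unfold W. rewrite <- (Rmult_1_r (INR N)). apply Cmod_csum_le. intros k _.
    rewrite Cmod_mult, Hwg. specialize (Hu (z k) (Hzin k)). unfold inU in Hu. change (Cmod (u (z k)) < 1) in Hu. lra. }
  set (B := INR N * M * q ^ (N + 2) / (1 - q)).
  assert (HL : Cmod (W - RtoC (INR N) * d 2%nat * RtoC r ^ 2)%C <= B).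
  { apply (lim_le (fun m => csum (fun k => psum d (z k) m * wg k)%C N)).
    - intros eps He.
      destruct (uniform_conv (fun k m => psum d (z k) m) (fun k => u (z k)) N
        ltac:(intros k _ eps' He'; destruct (Hs (z k) (Hzin k) eps' He') as [m0 Hm0]; exists m0; exact Hm0)
        (eps / (2 * INR N)) ltac:(apply Rdiv_lt_0_compat; lra)) as [m0 Hm0].
      exists m0. intros m Hm.
      replace (csum (fun k => psum d (z k) m * wg k)%C N - W)%C with
        (csum (fun k => (psum d (z k) m - u (z k)) * wg k)%C N).
      2:{ unfold W. rewrite csum_sub. apply csum_ext. intros; ring. }
      eapply Rle_lt_trans. apply (Cmod_csum_le _ _ (eps / (2 * INR N))).
      + intros k Hk. rewrite Cmod_mult, Hwg, Rmult_1_r. left. apply Hm0; auto.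
      + replace (INR N * (eps / (2 * INR N))) with (eps / 2) by (field; lra). lra.
    - intros N'. exists (N' + N + 1)%nat. split; [lia|].
      rewrite SI. replace (S (N' + N + 1)) with (N + 2 + N')%nat by lia.
      rewrite <- Hlow. eapply Rle_trans. apply Htail. unfold B.
      unfold Rdiv. apply Rmult_le_compat_r. left; apply Rinv_0_lt_compat; lra.
      assert (0 <= q ^ N') by (apply pow_le; lra).
      assert (0 <= INR N * M * q ^ (N + 2)) by (apply Rmult_le_pos; [apply Rmult_le_pos; lra|apply pow_le; lra]).
      nra. }
  assert (Hm : Cmod (RtoC (INR N) * d 2%nat * RtoC r ^ 2)%C = INR N * (Cmod (d 2%nat) * r ^ 2)).
  { rewrite !Cmod_mult, Cmod_pow, !Cmod_t; try apply pos_INR; try lra; try ring. }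
  pose proof (Cmod_triang3 (RtoC (INR N) * d 2%nat * RtoC r ^ 2)%C W (RtoC 0)) as T.
  replace (RtoC (INR N) * d 2%nat * RtoC r ^ 2 - 0)%C with (RtoC (INR N) * d 2%nat * RtoC r ^ 2)%C in T by ring.
  replace (W - 0)%C with W in T by ring. rewrite Cmod_sym in T. rewrite Hm in T.
  fold q R0. apply Rmult_le_reg_l with (INR N); auto.
  assert (INR N * (1 + M * q ^ (N + 2) / (1 - q)) = INR N + B) by (unfold B; field; lra).
  lra.
Qed.

Lemma cauchy2 (u : C -> C) d :
  (forall z, inU z -> ps_sum d z (u z)) -> (forall z, inU z -> inU (u z)) ->
  Cmod (d 2%nat) <= 1.
Proof.
  intros Hs Hu.
  assert (Step : forall r, 0 < r < 1 -> Cmod (d 2%nat) * r ^ 2 <= 1).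
  { intros r Hr. destruct (coef_bound d u ((1 + r)/2) ltac:(lra) Hs) as [M [HM Hc]].
    set (q := r / ((1 + r)/2)).
    assert (Hq0 : 0 < q) by (unfold q; apply Rdiv_lt_0_compat; lra).
    assert (Hq1 : q < 1) by (unfold q; apply Rmult_lt_reg_r with ((1+r)/2); [lra|]; unfold Rdiv; rewrite Rmult_assoc, Rinv_l; lra).
    apply Rle_plus_epsilon. intros e He.
    destruct (pow_lt_1_zero q ltac:(rewrite Rabs_pos_eq; lra) (e * (1 - q) / (M + 1))
       ltac:(apply Rdiv_lt_0_compat; [apply Rmult_lt_0_compat|]; lra)) as [N0 HN0].
    pose proof (cauchy_step u d r (N0 + 3) M Hs Hu Hr ltac:(lia) HM Hc) as S. fold q in S.
    specialize (HN0 (N0 + 3 + 2)%nat ltac:(lia)). rewrite Rabs_pos_eq in HN0 by (apply pow_le; lra).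
    assert (M * q ^ (N0 + 3 + 2) / (1 - q) <= e).
    { apply Rmult_le_reg_r with (1 - q). lra. unfold Rdiv. rewrite Rmult_assoc, Rinv_l by lra.
      assert (M * q ^ (N0 + 3 + 2) <= M * (e * (1 - q) / (M + 1))) by (apply Rmult_le_compat_l; lra).
      assert (M * (e * (1 - q) / (M + 1)) <= e * (1 - q)).
      { unfold Rdiv. replace (M * (e * (1 - q) * / (M + 1))) with ((e * (1 - q)) * (M / (M + 1))) by (field; lra).
        assert (M / (M + 1) <= 1) by (apply Rmult_le_reg_r with (M + 1); [lra|]; unfold Rdiv; rewrite Rmult_assoc, Rinv_l; lra).
        assert (0 <= e * (1 - q)) by nra. nra. }
      lra. }
    lra. }
  apply Rle_plus_epsilon. intros e He.
  set (e' := Rmin (e/3) 1).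
  assert (He' : 0 < e') by (apply Rmin_pos; lra).
  assert (He1 : e' <= e/3) by apply Rmin_l. assert (He2 : e' <= 1) by apply Rmin_r.
  specialize (Step (1 / (1 + e')) ltac:(split; [apply Rdiv_lt_0_compat; lra|]; apply Rmult_lt_reg_r with (1 + e'); [lra|]; unfold Rdiv; rewrite Rmult_assoc, Rinv_l; lra)).
  replace ((1 / (1 + e')) ^ 2) with (/ (1 + e') ^ 2) in Step by (field; lra).
  assert (Cmod (d 2%nat) <= (1 + e') ^ 2).
  { apply Rmult_le_reg_r with (/ (1 + e') ^ 2). apply Rinv_0_lt_compat, pow_lt; lra.
    rewrite Rinv_r by (apply pow_nonzero; lra). lra. }
  nra.
Qed.

Lemma starlike_coef beta h c : 0 < beta <= 1 -> c O = RtoC 0 -> c 1%nat = RtoC 1 ->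
  (forall z, inU z -> ps_sum c z (h z)) -> strongly_starlike_cond beta h ->
  exists d1 d2, Cmod d2 <= 1 /\ c 2%nat = (RtoC (2 * beta) * d1)%C /\
    (RtoC 2 * c 3%nat - c 2%nat ^ 2)%C = (RtoC (2 * beta) * d2 + RtoC (2 * beta ^ 2) * d1 ^ 2)%C.
Proof.
  intros Hb H0 H1 Hs [hd [Hd [w [[d Hw] [Hw0 [HwU Hsub]]]]]].
  exists (d 1%nat), (d 2%nat). split.
  { apply (cauchy2 w d); auto. }
  pose proof (sq_expand c h hd H0 H1 Hs Hd) as A.
  pose proof (sub_expand beta w d Hb Hw Hw0) as B.
  assert (Hc : Ob 3 (fun t => (c 2%nat - RtoC (2 * beta) * d 1%nat) * RtoC t +
      ((RtoC 2 * c 3%nat - c 2%nat ^ 2) - (RtoC (2 * beta) * d 2%nat + RtoC (2 * beta ^ 2) * d 1%nat ^ 2)) * RtoC t ^ 2)%C).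
  { apply (Ob_ext 3 (fun t => 
       (strong_fun beta (w (RtoC t)) - (1 + RtoC (2 * beta) * d 1%nat * RtoC t
       + (RtoC (2 * beta) * d 2%nat + RtoC (2 * beta ^ 2) * d 1%nat ^ 2) * RtoC t ^ 2)) -
       (starlike_quot h hd (RtoC t) -
       (1 + c 2%nat * RtoC t + (RtoC 2 * c 3%nat - c 2%nat ^ 2) * RtoC t ^ 2)))%C).
    apply Ob_sub; auto.
    exists (1/2). split; [lra|]. intros t Ht.
    rewrite Hsub. ring. unfold inU. change (Cmod (RtoC t) < 1). rewrite Cmod_t; lra. }
  apply coef2 in Hc as [E1 E2]. split.
  - toC. replace (c 2%nat) with ((c 2%nat - RtoC (2 * beta) * d 1%nat) + RtoC (2 * beta) * d 1%nat)%C by ring.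
    rewrite E1. ring.
  - replace (RtoC 2 * c 3%nat - c 2%nat ^ 2)%C with
      (((RtoC 2 * c 3%nat - c 2%nat ^ 2) - (RtoC (2 * beta) * d 2%nat + RtoC (2 * beta ^ 2) * d 1%nat ^ 2))
       + (RtoC (2 * beta) * d 2%nat + RtoC (2 * beta ^ 2) * d 1%nat ^ 2))%C by ring.
    rewrite E2. ring.
Qed.

Lemma Ob_sq m F : Ob m F -> Ob (m + m) (fun t => F t ^ 2)%C.
Proof. intros H. apply (Ob_eq _ (fun t => F t * F t)%C). apply Ob_mul; auto. intros; ring. Qed.

Lemma inverse_coef (f g : C -> C) a b r : a O = RtoC 0 -> a 1%nat = RtoC 1 -> b O = RtoC 0 ->
  (forall z, inU z -> ps_sum a z (f z)) -> (forall z, inU z -> ps_sum b z (g z)) ->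
  0 < r -> (forall w, Cmod w < r -> f (g w) = w) ->
  b 1%nat = RtoC 1 /\ b 2%nat = (- a 2%nat)%C /\ b 3%nat = (RtoC 2 * a 2%nat ^ 2 - a 3%nat)%C.
Proof.
  intros Ha0 Ha1 Hb0 Hf Hg Hr Hinv.
  destruct (coef_bound a f (1/2) ltac:(lra) Hf) as [Ma [HMa Hca]].
  destruct (coef_bound b g (1/2) ltac:(lra) Hg) as [Mb [HMb Hcb]].
  set (P := fun t => (b 1%nat * RtoC t + b 2%nat * RtoC t ^ 2 + b 3%nat * RtoC t ^ 3)%C).
  assert (G4 : Ob 4 (fun t => g (RtoC t) - P t)%C).
  { apply (Ob_eq 4 (fun t => g (RtoC t) - psum b (RtoC t) 3)%C).
    - apply (Ob_of_bound 4 (fun z => g z - psum b z 3)%C (1/4) (Mb * 2 ^ (3 + 2))); [lra|].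
      intros z Hz. apply ps_local; auto.
    - intros t _. rewrite psum3, Hb0. unfold P. ring. }
  assert (HP2 : Ob 2 (fun t => P t - b 1%nat * RtoC t)%C).
  { apply (Ob_eq 2 (fun t => b 2%nat * RtoC t ^ 2 + b 3%nat * RtoC t ^ 3)%C).
    apply Ob_add; apply Ob_tk; auto. intros; unfold P; ring. }
  assert (HP1 : Ob 1 P).
  { apply (Ob_eq 1 (fun t => (P t - b 1%nat * RtoC t) + b 1%nat * RtoC t ^ 1)%C).
    apply Ob_add. apply (Ob_le 1 2); auto. apply Ob_tk; auto. intros; ring. }
  assert (HP0 : Ob 0 P) by (apply (Ob_le 0 1); auto).
  assert (Hg1 : Ob 1 (fun t => g (RtoC t))).
  { apply (Ob_eq 1 (fun t => (g (RtoC t) - P t) + P t)%C).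
    apply Ob_add; auto. apply (Ob_le 1 4); auto. intros; ring. }
  assert (Hg0 : Ob 0 (fun t => g (RtoC t))) by (apply (Ob_le 0 1); auto).
  assert (F4 : Ob 4 (fun t => f (g (RtoC t)) - psum a (g (RtoC t)) 3)%C).
  { apply (Ob_comp 4 (fun z => f z - psum a z 3)%C (fun t => g (RtoC t)) (1/4) (Ma * 2 ^ (3 + 2))); auto; [lra|].
    intros z Hz. apply ps_local; auto. }
  assert (Hc : Ob 4 (fun t => (RtoC 1 - b 1%nat) * RtoC t + (- (b 2%nat + a 2%nat * b 1%nat ^ 2)) * RtoC t ^ 2
       + (- (b 3%nat + RtoC 2 * a 2%nat * b 1%nat * b 2%nat + a 3%nat * b 1%nat ^ 3)) * RtoC t ^ 3)%C).
  { apply (Ob_ext 4 (fun t =>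
      (f (g (RtoC t)) - psum a (g (RtoC t)) 3)
      + (g (RtoC t) - P t) * (1 + a 2%nat * (g (RtoC t) + P t) + a 3%nat * (g (RtoC t) ^ 2 + g (RtoC t) * P t + P t ^ 2))
      + a 2%nat * (RtoC 2 * b 1%nat * b 3%nat * RtoC t ^ 4 + (P t - b 1%nat * RtoC t) * (P t - b 1%nat * RtoC t))
      + a 3%nat * ((P t - b 1%nat * RtoC t) * (P t ^ 2 + P t * (b 1%nat * RtoC t) + (b 1%nat * RtoC t) ^ 2)))%C).
    - apply Ob_add. apply Ob_add. apply Ob_add. auto.
      + replace 4%nat with (4 + 0)%nat by reflexivity. apply Ob_mul; auto.
        apply Ob_add. apply Ob_add. apply Ob_const.
        replace 0%nat with (0 + 0)%nat by reflexivity. apply Ob_mul. apply Ob_const. apply Ob_add; auto.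
        replace 0%nat with (0 + 0)%nat by reflexivity. apply Ob_mul. apply Ob_const.
        apply Ob_add. apply Ob_add.
        * apply (Ob_sq 0 (fun t => g (RtoC t))); auto.
        * replace 0%nat with (0 + 0)%nat by reflexivity. apply Ob_mul; auto.
        * apply (Ob_sq 0 P); auto.
      + replace 4%nat with (0 + 4)%nat by reflexivity. apply Ob_mul. apply Ob_const.
        apply Ob_add. apply Ob_tk; auto. replace 4%nat with (2 + 2)%nat by reflexivity. apply Ob_mul; auto.
      + replace 4%nat with (0 + (2 + 2))%nat by reflexivity. apply Ob_mul. apply Ob_const.
        apply Ob_mul; auto.
        apply Ob_add. apply Ob_add.
        * apply (Ob_sq 1 P); auto.
        * replace 2%nat with (1 + 1)%nat by reflexivity. apply Ob_mul; auto.
          apply (Ob_eq 1 (fun t => b 1%nat * RtoC t ^ 1)%C). apply Ob_tk; auto. intros; ring.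
        * apply (Ob_eq 2 (fun t => b 1%nat ^ 2 * RtoC t ^ 2)%C). apply Ob_tk; auto. intros; ring.
    - exists (Rmin (r/2) (1/2)). split. apply Rmin_pos; lra. intros t Ht.
      assert (Ht1 : t <= r/2) by (pose proof (Rmin_l (r/2) (1/2)); lra).
      assert (Ht2 : t <= 1/2) by (pose proof (Rmin_r (r/2) (1/2)); lra).
      rewrite (Hinv (RtoC t)) by (rewrite Cmod_t by lra; lra).
      rewrite psum3, Ha0, Ha1. unfold P. ring. }
  apply coef3 in Hc as [E1 [E2 E3]].
  assert (B1 : b 1%nat = RtoC 1).
  { toC. replace (b 1%nat) with (RtoC 1 - (RtoC 1 - b 1%nat))%C by ring. rewrite E1. ring. }
  assert (B2 : b 2%nat = (- a 2%nat)%C).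
  { toC. replace (b 2%nat) with (- (- (b 2%nat + a 2%nat * b 1%nat ^ 2)) - a 2%nat * b 1%nat ^ 2)%C by ring.
    rewrite E2, B1. ring. }
  split; auto. split; auto.
  toC. replace (b 3%nat) with (- (- (b 3%nat + RtoC 2 * a 2%nat * b 1%nat * b 2%nat + a 3%nat * b 1%nat ^ 3))
     - (RtoC 2 * a 2%nat * b 1%nat * b 2%nat + a 3%nat * b 1%nat ^ 3))%C by ring.
  rewrite E3, B1, B2. ring.
Qed.

Theorem corollary3p13 (beta : R) (f : Cplx -> Cplx) (a : nat -> Cplx)
  (hb0 : 0 < beta) (hb1 : beta <= 1)
  (hf : strongly_bistarlike beta f a) :
  Cnorm (Csub (a 3%nat) (Cpow (a 2%nat) 2)) <= beta.
Proof.
  destruct hf as [Ha0 [Ha1 [Hf [Funiv [g [[b Hg] [Guniv [[r [Hr Hinv]] [Sf Sg]]]]]]]]].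
  assert (Hb : 0 < beta <= 1) by lra.
  assert (In0 : inU (RtoC 0)) by (unfold inU; change (Cmod (RtoC 0) < 1); rewrite Cmod_0; lra).
  assert (f0 : f (RtoC 0) = RtoC 0).
  { rewrite (ps_sum_0 a (f (RtoC 0))) by (apply Hf; auto). exact Ha0. }
  assert (g0 : g (RtoC 0) = RtoC 0).
  { destruct (Hinv (RtoC 0)) as [Hin Hfg]. change (Cmod (RtoC 0) < r). rewrite Cmod_0; lra.
    apply Funiv; auto. rewrite Hfg, f0. reflexivity. }
  assert (Hb0 : b O = RtoC 0).
  { rewrite <- (ps_sum_0 b (g (RtoC 0))) by (apply Hg; auto). exact g0. }
  destruct (inverse_coef f g a b r Ha0 Ha1 Hb0 Hf Hg Hr) as [B1 [B2 B3]].
  { intros w Hw. apply Hinv. exact Hw. }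
  destruct (starlike_coef beta f a Hb Ha0 Ha1 Hf Sf) as [u1 [u2 [Hu2 [E1 E2]]]].
  destruct (starlike_coef beta g b Hb Hb0 B1 Hg Sg) as [v1 [v2 [Hv2 [F1 F2]]]].
  rewrite B2 in F1. rewrite B2, B3 in F2.
  assert (Hbz : RtoC (2 * beta) <> RtoC 0) by (apply RtoC_nz; lra).
  assert (V1 : v1 = (- u1)%C).
  { assert (Z : (RtoC (2 * beta) * (u1 + v1))%C = RtoC 0).
    { replace (RtoC (2 * beta) * (u1 + v1))%C with (RtoC (2 * beta) * u1 + RtoC (2 * beta) * v1)%C by ring.
      rewrite <- E1, <- F1. ring. }
    assert (Z' : (u1 + v1)%C = RtoC 0).
    { replace (u1 + v1)%C with (/ RtoC (2 * beta) * (RtoC (2 * beta) * (u1 + v1)))%C by (field; auto).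
      rewrite Z. ring. }
    toC. replace v1 with ((u1 + v1) - u1)%C by ring. rewrite Z'. ring. }
  rewrite V1 in F2.
  assert (K : (RtoC 4 * (a 3%nat - a 2%nat ^ 2))%C = (RtoC (2 * beta) * (u2 - v2))%C).
  { replace (RtoC 4 * (a 3%nat - a 2%nat ^ 2))%C with
      ((RtoC 2 * a 3%nat - a 2%nat ^ 2) - (RtoC 2 * (RtoC 2 * a 2%nat ^ 2 - a 3%nat) - (- a 2%nat) ^ 2))%C.
    2:{ replace (RtoC 4) with (RtoC 2 * RtoC 2)%C by (rewrite <- RtoC_mult; f_equal; ring). ring. }
    rewrite E2, F2. ring. }
  change (Cnorm (Csub (a 3%nat) (Cpow (a 2%nat) 2))) with (Cmod (a 3%nat - a 2%nat ^ 2)%C).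
  apply (f_equal Cmod) in K. rewrite !Cmod_mult, !Cmod_t in K by lra.
  assert (Cmod (u2 - v2)%C <= 2) by (eapply Rle_trans; [apply Cmod_sub_le|lra]).
  nra.
Qed.
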